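(* Let $m\ge4$ and let $g(x_1,x_2,x_3)=a_1(cx_1+\alpha_1)^2+a_2(cx_2+\alpha_2)^2+a_3(cx_3+\alpha_3)^2$ be a tight regular complete quadratic polynomial where $a_1,a_2,a_3$ are positive integers with $\gcd(a_1,a_2,a_3)=1$ and $a_1\le a_2\le a_3$, the lattice $J=\langle a_1,a_2,a_3\rangle$ is $p$-stable for every prime $p\nmid c$, $\alpha_i\in\mathbb{Z}$ with $0<\alpha_i<c/2$, and $\gcd(c,\alpha_1\alpha_2\alpha_3)=1$. Let $T$ be the set of primes $p\ge5$ such that $J\otimes\mathbb{Z}_p$ is anisotropic, and $t=|T|$. Let $\kappa$ be a positive integer coprime to every prime in $T$, and let $\nu$ be a nonnegative integer such that $\delta c(\kappa n+\nu)+a_1\alpha_1^2+a_2\alpha_2^2+a_3\alpha_3^2$ is represented by $g$ over $\mathbb{Z}_2$ and over $\mathbb{Z}_3$ for every integer $n\ge0$. For $u\in\mathbb{Z}_{\ge0}$ let $\beta(u)=\delta c(\kappa u+\nu)+a_1\alpha_1^2+a_2\alpha_2^2+a_3\alpha_3^2$. Then for every positive integer $s\ge t$ and every positive integer $n$, $$\bigl|\{0\le u\le n-1:\ \beta(u)\text{ is represented by }g\text{ over }\mathbb{Z}\}\bigr|\ge\eta(n,s).$$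
   Context: Define $\delta=4$ if $m$ is odd, $\delta=2$ if $m\equiv2\pmod4$, $\delta=1$ if $m\equiv0\pmod4$, and $c=\delta\frac{m-2}{2}$. Representation by $g$ over $R\in\{\mathbb{Z},\mathbb{Z}_p,\mathbb{R}\}$ means solvability of $g(\mathbf{x})=n$ with $\mathbf{x}\in R^3$; $g$ is tight regular if it represents over $\mathbb{Z}$ every integer $\ge\min\{g(\mathbf{x}):\mathbf{x}\in\mathbb{Z}^3\}$ that is represented over every $\mathbb{Z}_p$ and over $\mathbb{R}$. For an odd prime $p$ with nonsquare unit $\Delta_p$, a diagonal ternary lattice $K$ is $p$-stable if $\langle1,-1\rangle$ is represented by $K\otimes\mathbb{Z}_p$ or $K\otimes\mathbb{Z}_p\cong\langle1,-\Delta_p\rangle\perp\langle p\epsilon\rangle$ with $\epsilon\in\mathbb{Z}_p^\times$; $K$ is $2$-stable if $K\otimes\mathbb{Z}_2$ is unimodular or $\langle1,3\rangle$ or $\langle1,7\rangle$ is represented by $K\otimes\mathbb{Z}_2$. The function $\eta$: let $P$ be the set of primes $\ge5$. For an odd prime $p$ and $s\ge1$ let $\psi_p(p^s)=\frac{p^s+p+2}{2p+2}$ if $s$ is odd and $\frac{p^s+2p+1}{2p+2}$ if $s$ is even. For $n\in\mathbb{N}$ with base-$p$ expansion $n=\sum_{i=0}^e b_ip^i$ ($0\le b_i\le p-1$), let $\psi_p(n)=\sum_{1\le i\le e}b_i\psi_p(p^i)$ if $b_0=0$ and $\psi_p(n)=1+\sum_{1\le i\le e}b_i\psi_p(p^i)$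 otherwise. Then $\eta(n,s)=\min\{n-\sum_{p\in P'}\psi_p(n):\ P'\subset P,\ |P'|=s\}$. *)

(* Defs.v *)
From Stdlib Require Import ZArith Znumtheory Reals List.
Import ListNotations.
Open Scope Z_scope.

Definition delta_m (m : Z) : Z :=
  if Z.odd m then 4 else if Z.eqb (m mod 4) 2 then 2 else 1.
(* c = delta * (m-2)/2 ; the product is always even, so the division is exact *)
Definition c_m (m : Z) : Z := delta_m m * (m - 2) / 2.

Record cqp := CQP { qc : Z; qa1 : Z; qa2 : Z; qa3 : Z; qal1 : Z; qal2 : Z; qal3 : Z }.

Definition gZ (g : cqp) (x1 x2 x3 : Z) : Z :=
  qa1 g * (qc g * x1 + qal1 g) ^ 2 + qa2 g * (qc g * x2 + qal2 g) ^ 2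
  + qa3 g * (qc g * x3 + qal3 g) ^ 2.

Definition gR (g : cqp) (x1 x2 x3 : R) : R :=
  (IZR (qa1 g) * (IZR (qc g) * x1 + IZR (qal1 g)) ^ 2
  + IZR (qa2 g) * (IZR (qc g) * x2 + IZR (qal2 g)) ^ 2
  + IZR (qa3 g) * (IZR (qc g) * x3 + IZR (qal3 g)) ^ 2)%R.

(** * p-adic integers, modelled as the inverse limit Z_p = lim Z/p^k Z :
    a p-adic integer is a sequence x with x (k) read modulo p^k and
    x (k+1) = x (k) (mod p^k).  An identity between integer polynomial
    expressions holds in Z_p iff it holds modulo p^k at every level k. *)
Definition ppow (p : Z) (k : nat) : Z := p ^ Z.of_nat k.

Definition padic (p : Z) (x : nat -> Z) : Prop :=
  forall k : nat, (ppow p k | x (S k) - x k).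

Definition padic_unit (p : Z) (x : nat -> Z) : Prop := ~ (p | x 1%nat).

Definition padic_nonzero (p : Z) (x : nat -> Z) : Prop :=
  exists k : nat, ~ (ppow p k | x k).

Definition rep_Z (g : cqp) (N : Z) : Prop :=
  exists x1 x2 x3 : Z, gZ g x1 x2 x3 = N.

Definition rep_Zp (g : cqp) (p : Z) (N : Z) : Prop :=
  exists x1 x2 x3 : nat -> Z, padic p x1 /\ padic p x2 /\ padic p x3 /\
    forall k : nat, (ppow p k | gZ g (x1 k) (x2 k) (x3 k) - N).

Definition rep_R (g : cqp) (N : Z) : Prop :=
  exists x1 x2 x3 : R, gR g x1 x2 x3 = IZR N.

Definition tight_regular (g : cqp) : Prop :=
  exists gmin : Z,
    (exists x1 x2 x3, gZ g x1 x2 x3 = gmin) /\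
    (forall x1 x2 x3, gmin <= gZ g x1 x2 x3) /\
    (forall N : Z, gmin <= N ->
       (forall p, prime p -> rep_Zp g p N) -> rep_R g N -> rep_Z g N).

Definition QJ (a1 a2 a3 x1 x2 x3 : Z) : Z := a1 * x1 ^ 2 + a2 * x2 ^ 2 + a3 * x3 ^ 2.
Definition BJ (a1 a2 a3 x1 x2 x3 y1 y2 y3 : Z) : Z :=
  a1 * x1 * y1 + a2 * x2 * y2 + a3 * x3 * y3.
Definition det3 (x1 x2 x3 y1 y2 y3 z1 z2 z3 : Z) : Z :=
  x1 * (y2 * z3 - y3 * z2) - x2 * (y1 * z3 - y3 * z1) + x3 * (y1 * z2 - y2 * z1).

(* the binary lattice <d1,d2> is represented by J (x) Z_p :
   there are v, w in Z_p^3 with Q(v) = d1, Q(w) = d2, B(v,w) = 0 *)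
Definition represents_binary (p a1 a2 a3 d1 d2 : Z) : Prop :=
  exists v1 v2 v3 w1 w2 w3 : nat -> Z,
    padic p v1 /\ padic p v2 /\ padic p v3 /\
    padic p w1 /\ padic p w2 /\ padic p w3 /\
    forall k : nat,
      (ppow p k | QJ a1 a2 a3 (v1 k) (v2 k) (v3 k) - d1) /\
      (ppow p k | QJ a1 a2 a3 (w1 k) (w2 k) (w3 k) - d2) /\
      (ppow p k | BJ a1 a2 a3 (v1 k) (v2 k) (v3 k) (w1 k) (w2 k) (w3 k)).

(* J (x) Z_p is isometric to <1,-Delta> _|_ <p eps> with eps a unit:
   there is a Z_p-basis e1,e2,e3 of Z_p^3 (determinant a unit) which is
   orthogonal with Q(e1) = 1, Q(e2) = -Delta, Q(e3) = p eps. *)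
Definition isometric_1_mDelta_peps (p a1 a2 a3 Delta : Z) : Prop :=
  exists e11 e12 e13 e21 e22 e23 e31 e32 e33 eps : nat -> Z,
    padic p e11 /\ padic p e12 /\ padic p e13 /\
    padic p e21 /\ padic p e22 /\ padic p e23 /\
    padic p e31 /\ padic p e32 /\ padic p e33 /\
    padic p eps /\ padic_unit p eps /\
    ~ (p | det3 (e11 1%nat) (e12 1%nat) (e13 1%nat) (e21 1%nat) (e22 1%nat)
               (e23 1%nat) (e31 1%nat) (e32 1%nat) (e33 1%nat)) /\
    forall k : nat,
      (ppow p k | QJ a1 a2 a3 (e11 k) (e12 k) (e13 k) - 1) /\
      (ppow p k | QJ a1 a2 a3 (e21 k) (e22 k) (e23 k) + Delta) /\
      (ppow p k | QJ a1 a2 a3 (e31 k) (e32 k) (e33 k) - p * eps k) /\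
      (ppow p k | BJ a1 a2 a3 (e11 k) (e12 k) (e13 k) (e21 k) (e22 k) (e23 k)) /\
      (ppow p k | BJ a1 a2 a3 (e11 k) (e12 k) (e13 k) (e31 k) (e32 k) (e33 k)) /\
      (ppow p k | BJ a1 a2 a3 (e21 k) (e22 k) (e23 k) (e31 k) (e32 k) (e33 k)).

(* Delta is a nonsquare unit of Z_p (p odd): an integer which is a
   quadratic nonresidue mod p.  The isometry class of <1,-Delta> does not
   depend on the choice of Delta. *)
Definition nonsquare_unit (p Delta : Z) : Prop :=
  ~ (p | Delta) /\ forall y : Z, ~ (p | y ^ 2 - Delta).

Definition stable_odd (p a1 a2 a3 : Z) : Prop :=
  represents_binary p a1 a2 a3 1 (-1) \/
  exists Delta, nonsquare_unit p Delta /\ isometric_1_mDelta_peps p a1 a2 a3 Delta.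

(* J (x) Z_2 unimodular: its Gram determinant a1 a2 a3 is a unit of Z_2 *)
Definition stable_2 (a1 a2 a3 : Z) : Prop :=
  ~ (2 | a1 * a2 * a3) \/
  represents_binary 2 a1 a2 a3 1 3 \/ represents_binary 2 a1 a2 a3 1 7.

Definition pstable (p a1 a2 a3 : Z) : Prop :=
  if Z.eqb p 2 then stable_2 a1 a2 a3 else stable_odd p a1 a2 a3.

Definition anisotropic (p a1 a2 a3 : Z) : Prop :=
  ~ exists x1 x2 x3 : nat -> Z,
      padic p x1 /\ padic p x2 /\ padic p x3 /\
      (padic_nonzero p x1 \/ padic_nonzero p x2 \/ padic_nonzero p x3) /\
      forall k : nat, (ppow p k | QJ a1 a2 a3 (x1 k) (x2 k) (x3 k)).

Open Scope R_scope.

Definition psi_pow (p : Z) (i : nat) : R :=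
  if Nat.odd i
  then (IZR p ^ i + IZR p + 2) / (2 * IZR p + 2)
  else (IZR p ^ i + 2 * IZR p + 1) / (2 * IZR p + 2).

Definition digit (p n : Z) (i : nat) : Z := ((n / p ^ Z.of_nat i) mod p)%Z.

(* psi_p(n) = [b_0 <> 0] + sum_{1 <= i <= e} b_i psi_p(p^i).
   The sum is taken over 1 <= i <= n, which is >= e (digits beyond e vanish). *)
Definition psi (p n : Z) : R :=
  (if Z.eqb (digit p n 0) 0 then 0 else 1)
  + fold_right Rplus 0
      (map (fun i => IZR (digit p n i) * psi_pow p i) (seq 1 (Z.to_nat n))).

Definition admissible (s : nat) (P' : list Z) : Prop :=
  NoDup P' /\ length P' = s /\ forall p, In p P' -> prime p /\ (5 <= p)%Z.

Definition eta_value (n : Z) (P' : list Z) : R :=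
  IZR n - fold_right Rplus 0 (map (fun p => psi p n) P').

Definition is_eta (n : Z) (s : nat) (e : R) : Prop :=
  (exists P', admissible s P' /\ eta_value n P' = e) /\
  (forall P', admissible s P' -> e <= eta_value n P').

Close Scope R_scope.

(* Main.v *)
Require Import Defs.
From Stdlib Require Import Setoid Morphisms ZArith Znumtheory Reals List Lia Lra Psatz ClassicalEpsilon Classical Zpow_facts.
Import ListNotations.
Open Scope Z_scope.


Lemma ppow_0 p : ppow p 0 = 1.
Proof. reflexivity. Qed.

Lemma ppow_S p k : ppow p (S k) = p * ppow p k.
Proof. unfold ppow. rewrite Nat2Z.inj_succ, Z.pow_succ_r by lia. ring. Qed.

Lemma ppow_add p k l : ppow p (k + l) = ppow p k * ppow p l.
Proof. unfold ppow. rewrite Nat2Z.inj_add, Z.pow_add_r by lia. ring. Qed.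

Lemma ppow_pos p k : 0 < p -> 0 < ppow p k.
Proof. intros. unfold ppow. apply Z.pow_pos_nonneg; lia. Qed.

Lemma ppow_dvd p k k' : (k <= k')%nat -> (ppow p k | ppow p k').
Proof.
  intros H. replace k' with (k + (k' - k))%nat by lia. rewrite ppow_add.
  apply Z.divide_factor_l.
Qed.

Lemma ppow_1 p : ppow p 1 = p.
Proof. unfold ppow. simpl. apply Z.pow_1_r. Qed.

Lemma dvd_trans' a b c : (a | b) -> (b | c) -> (a | c).
Proof. apply Z.divide_trans. Qed.

Lemma padic_le p x : padic p x -> forall k k', (k <= k')%nat -> (ppow p k | x k' - x k).
Proof.
  intros Hx k k' H. induction H.
  - replace (x k - x k) with 0 by ring. apply Z.divide_0_r.
  - replace (x (S m) - x k) with ((x (S m) - x m) + (x m - x k)) by ring.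
    apply Z.divide_add_r; auto.
    apply Z.divide_trans with (ppow p m); auto. apply ppow_dvd; auto.
Qed.

Lemma padic_const p c : padic p (fun _ => c).
Proof. intro k. replace (c - c) with 0 by ring. apply Z.divide_0_r. Qed.

Lemma padic_add p x y : padic p x -> padic p y -> padic p (fun k => x k + y k).
Proof.
  intros Hx Hy k. replace (x (S k) + y (S k) - (x k + y k)) with
    ((x (S k) - x k) + (y (S k) - y k)) by ring. apply Z.divide_add_r; auto.
Qed.

Lemma padic_opp p x : padic p x -> padic p (fun k => - x k).
Proof.
  intros Hx k. replace (- x (S k) - - x k) with (-1 * (x (S k) - x k)) by ring.
  apply Z.divide_mul_r; auto.
Qed.

Lemma padic_sub p x y : padic p x -> padic p y -> padic p (fun k => x k - y k).
Proof.
  intros Hx Hy k. replace (x (S k) - y (S k) - (x k - y k)) with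
    ((x (S k) - x k) - (y (S k) - y k)) by ring. apply Z.divide_sub_r; auto.
Qed.

Lemma padic_mul p x y : padic p x -> padic p y -> padic p (fun k => x k * y k).
Proof.
  intros Hx Hy k. replace (x (S k) * y (S k) - (x k * y k)) with
    (x (S k) * (y (S k) - y k) + y k * (x (S k) - x k)) by ring.
  apply Z.divide_add_r; apply Z.divide_mul_r; auto.
Qed.

Lemma build (p : Z) (P : nat -> Z -> Prop) :
  (forall k y, P k y -> exists y', P (S k) y' /\ (ppow p k | y' - y)) ->
  forall y0, P 0%nat y0 -> exists x, padic p x /\ forall k, P k (x k).
Proof.
  intros Hstep y0 H0.
  assert (F : forall k (y : {y | P k y}), {y' | P (S k) y' /\ (ppow p k | y' - proj1_sig y)}).
  { intros k [y Hy]. apply constructive_indefinite_description. simpl. apply Hstep; auto. }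
  pose (g := fix g (k : nat) : {y | P k y} :=
    match k with O => exist _ y0 H0 | S k' => let (y', H') := F k' (g k') in exist _ y' (proj1 H') end).
  exists (fun k => proj1_sig (g k)). split.
  - intro k. simpl. destruct (F k (g k)) as [y' [H1 H2]]. simpl. exact H2.
  - intro k. exact (proj2_sig (g k)).
Qed.

Lemma lin_solve p D r : prime p -> ~ (p | D) -> exists t, (p | r + t * D).
Proof.
  intros Hp HD. destruct (rel_prime_bezout p D (prime_rel_prime p Hp D HD)) as [u v Huv].
  exists (- r * v). exists (r * u).
  replace (r + - r * v * D) with (r * (1 - v * D)) by ring. rewrite <- Huv. ring.
Qed.

Lemma prime_gt1 p : prime p -> 1 < p.
Proof. intros H. destruct H; auto. Qed.

Lemma hensel p (A B C : nat -> Z) x0 :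
  prime p -> padic p A -> padic p B -> padic p C ->
  (p | A 1%nat * x0 ^ 2 + B 1%nat * x0 + C 1%nat) ->
  ~ (p | 2 * A 1%nat * x0 + B 1%nat) ->
  exists x, padic p x /\ forall k, (ppow p k | A k * x k ^ 2 + B k * x k + C k).
Proof.
  intros Hp HA HB HC H1 H2.
  assert (p1 := prime_gt1 p Hp).
  destruct (build p (fun k y => (ppow p k | A k * y ^ 2 + B k * y + C k) /\ (p | y - x0))) with (y0 := x0)
    as [x [Hx Hk]].
  - intros k y [Hy1 Hy2]. destruct k as [|k].
    + exists x0. split.
      * split. rewrite ppow_1. exact H1. replace (x0 - x0) with 0 by ring. apply Z.divide_0_r.
      * rewrite ppow_0. apply Z.divide_1_l.
    + set (K := S k) in *.
      assert (HKp : (ppow p K | A (S K) * y ^ 2 + B (S K) * y + C (S K))).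
      { replace (A (S K) * y ^ 2 + B (S K) * y + C (S K)) with
          ((A K * y ^ 2 + B K * y + C K) + ((A (S K) - A K) * y ^ 2 + (B (S K) - B K) * y + (C (S K) - C K))) by ring.
        apply Z.divide_add_r; auto.
        apply Z.divide_add_r; [apply Z.divide_add_r|]; try apply Z.divide_mul_l; auto. }
      destruct HKp as [r Hr].
      assert (HD : ~ (p | 2 * A (S K) * y + B (S K))).
      { intro HD. apply H2.
        assert (HA1 : (p | A (S K) - A 1%nat)). { rewrite <- (ppow_1 p). apply padic_le; auto. lia. }
        assert (HB1 : (p | B (S K) - B 1%nat)). { rewrite <- (ppow_1 p). apply padic_le; auto. lia. }
        replace (2 * A 1%nat * x0 + B 1%nat) with
          ((2 * A (S K) * y + B (S K)) - 2 * (A (S K) - A 1%nat) * y - 2 * A 1%nat * (y - x0) - (B (S K) - B 1%nat)) by ring.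
        apply Z.divide_sub_r; [apply Z.divide_sub_r; [apply Z.divide_sub_r|]|]; auto.
        - apply Z.divide_mul_l. apply Z.divide_mul_r. auto.
        - apply Z.divide_mul_r. auto. }
      destruct (lin_solve p _ r Hp HD) as [t Ht].
      exists (y + t * ppow p K). split; [split|].
      * rewrite ppow_S.
        replace (A (S K) * (y + t * ppow p K) ^ 2 + B (S K) * (y + t * ppow p K) + C (S K)) with
          (r * ppow p K + ppow p K * (t * (2 * A (S K) * y + B (S K))) + A (S K) * t ^ 2 * ppow p K * ppow p K)
          by (rewrite <- Hr; ring).
        replace (r * ppow p K + ppow p K * (t * (2 * A (S K) * y + B (S K))) + A (S K) * t ^ 2 * ppow p K * ppow p K)
          with (ppow p K * (r + t * (2 * A (S K) * y + B (S K))) + A (S K) * t ^ 2 * ppow p K * ppow p K) by ring.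
        apply Z.divide_add_r.
        -- rewrite (Z.mul_comm p (ppow p K)). apply Z.mul_divide_mono_l. exact Ht.
        -- rewrite <- Z.mul_assoc. apply Z.divide_mul_r.
           rewrite (Z.mul_comm p (ppow p K)). apply Z.mul_divide_mono_l.
           unfold K. rewrite ppow_S. apply Z.divide_factor_l.
      * replace (y + t * ppow p K - x0) with ((y - x0) + t * ppow p K) by ring.
        apply Z.divide_add_r; auto. apply Z.divide_mul_r. unfold K. rewrite ppow_S. apply Z.divide_factor_l.
      * replace (y + t * ppow p K - y) with (t * ppow p K) by ring. apply Z.divide_factor_r.
  - split. rewrite ppow_0. apply Z.divide_1_l. replace (x0 - x0) with 0 by ring. apply Z.divide_0_r.
  - exists x. split; auto. intro k. apply Hk.
Qed.

Lemma padic_inv p c : prime p -> ~ (p | c) -> exists ci, padic p ci /\ forall k, (ppow p k | c * ci k - 1).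
Proof.
  intros Hp Hc. destruct (lin_solve p c (-1) Hp Hc) as [x0 Hx0].
  destruct (hensel p (fun _ => 0) (fun _ => c) (fun _ => -1) x0 Hp) as [x [Hx Hk]];
    try apply padic_const.
  - replace (0 * x0 ^ 2 + c * x0 + -1) with (-1 + x0 * c) by ring. auto.
  - replace (2 * 0 * x0 + c) with c by ring. auto.
  - exists x. split; [exact Hx|]. intro k. specialize (Hk k). simpl in Hk.
    replace (c * x k - 1) with (0 * x k ^ 2 + c * x k + -1) by ring. auto.
Qed.


Lemma dvd_small p a : 0 < p -> (p | a) -> - p < a < p -> a = 0.
Proof.
  intros Hp [k ->] H. destruct (Z.lt_trichotomy k 0) as [Hk|[Hk|Hk]].
  - assert (k * p <= - p) by nia. lia.
  - subst. ring.
  - assert (p <= k * p) by nia. lia.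
Qed.

Lemma prime_odd_not2 p : prime p -> p <> 2 -> ~ (p | 2).
Proof.
  intros Hp H2 Hd. assert (1 < p) by (apply prime_gt1; auto).
  apply Z.divide_pos_le in Hd; try lia.
Qed.

Lemma prime_nd_mul p a b : prime p -> ~ (p | a) -> ~ (p | b) -> ~ (p | a * b).
Proof. intros Hp Ha Hb H. destruct (prime_mult p Hp a b H); auto. Qed.

Lemma prime_nd_sq p a : prime p -> ~ (p | a) -> ~ (p | a ^ 2).
Proof. intros Hp Ha. rewrite Z.pow_2_r. apply prime_nd_mul; auto. Qed.

Lemma dvd_sq_diff m a u y : (m | u - y) -> (m | a * u ^ 2 - a * y ^ 2).
Proof.
  intros H. replace (a * u ^ 2 - a * y ^ 2) with (a * (u + y) * (u - y)) by ring.
  apply Z.divide_mul_r; auto.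
Qed.

Definition Gq (c a1 a2 a3 al1 al2 al3 : Z) := CQP c a1 a2 a3 al1 al2 al3.

Lemma from_J p c a1 a2 a3 al1 al2 al3 N y1 y2 y3 :
  prime p -> ~ (p | c) -> padic p y1 -> padic p y2 -> padic p y3 ->
  (forall k, (ppow p k | QJ a1 a2 a3 (y1 k) (y2 k) (y3 k) - N)) ->
  rep_Zp (CQP c a1 a2 a3 al1 al2 al3) p N.
Proof.
  intros Hp Hc H1 H2 H3 HQ.
  destruct (padic_inv p c Hp Hc) as [ci [Hci Hk]].
  exists (fun k => ci k * (y1 k - al1)), (fun k => ci k * (y2 k - al2)), (fun k => ci k * (y3 k - al3)).
  repeat split; try (apply padic_mul; [auto| apply padic_sub; auto using padic_const]).
  intro k. unfold gZ; cbn [qa1 qa2 qa3 qc qal1 qal2 qal3].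
  assert (E : forall y al, (ppow p k | c * (ci k * (y - al)) + al - y)).
  { intros y al. replace (c * (ci k * (y - al)) + al - y) with ((c * ci k - 1) * (y - al)) by ring.
    apply Z.divide_mul_l. auto. }
  specialize (HQ k). unfold QJ in HQ.
  replace (a1 * (c * (ci k * (y1 k - al1)) + al1) ^ 2 + a2 * (c * (ci k * (y2 k - al2)) + al2) ^ 2 +
     a3 * (c * (ci k * (y3 k - al3)) + al3) ^ 2 - N) with
    ((a1 * (c * (ci k * (y1 k - al1)) + al1) ^ 2 - a1 * y1 k ^ 2) +
     (a2 * (c * (ci k * (y2 k - al2)) + al2) ^ 2 - a2 * y2 k ^ 2) +
     (a3 * (c * (ci k * (y3 k - al3)) + al3) ^ 2 - a3 * y3 k ^ 2) +
     (a1 * y1 k ^ 2 + a2 * y2 k ^ 2 + a3 * y3 k ^ 2 - N)) by ring.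
  apply Z.divide_add_r; [apply Z.divide_add_r; [apply Z.divide_add_r|]|]; auto; apply dvd_sq_diff; auto.
Qed.

Lemma QJ_combo a1 a2 a3 z1 z2 z3 e11 e12 e13 e21 e22 e23 e31 e32 e33 :
  QJ a1 a2 a3 (z1 * e11 + z2 * e21 + z3 * e31) (z1 * e12 + z2 * e22 + z3 * e32) (z1 * e13 + z2 * e23 + z3 * e33)
  = z1 ^ 2 * QJ a1 a2 a3 e11 e12 e13 + z2 ^ 2 * QJ a1 a2 a3 e21 e22 e23 + z3 ^ 2 * QJ a1 a2 a3 e31 e32 e33
    + 2 * z1 * z2 * BJ a1 a2 a3 e11 e12 e13 e21 e22 e23
    + 2 * z1 * z3 * BJ a1 a2 a3 e11 e12 e13 e31 e32 e33
    + 2 * z2 * z3 * BJ a1 a2 a3 e21 e22 e23 e31 e32 e33.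
Proof. unfold QJ, BJ. ring. Qed.

Lemma rep_hyp p c a1 a2 a3 al1 al2 al3 N :
  prime p -> p <> 2 -> ~ (p | c) -> represents_binary p a1 a2 a3 1 (-1) ->
  rep_Zp (CQP c a1 a2 a3 al1 al2 al3) p N.
Proof.
  intros Hp H2 Hc [v1 [v2 [v3 [w1 [w2 [w3 [Hv1 [Hv2 [Hv3 [Hw1 [Hw2 [Hw3 HK]]]]]]]]]]]].
  destruct (padic_inv p 2 Hp (prime_odd_not2 p Hp H2)) as [h [Hh Hhk]].
  pose (a := fun k => h k * (N + 1)). pose (b := fun k => h k * (N - 1)).
  assert (Ha : padic p a) by (apply padic_mul; auto using padic_const).
  assert (Hb : padic p b) by (apply padic_mul; auto using padic_const).
  apply (from_J p c a1 a2 a3 al1 al2 al3 N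
    (fun k => a k * v1 k + b k * w1 k + 0 * 0) (fun k => a k * v2 k + b k * w2 k + 0 * 0)
    (fun k => a k * v3 k + b k * w3 k + 0 * 0)); auto;
    try (repeat apply padic_add; apply padic_mul; auto using padic_const).
  intro k. rewrite QJ_combo. destruct (HK k) as [Q1 [Q2 Q3]].
  replace (a k ^ 2 * QJ a1 a2 a3 (v1 k) (v2 k) (v3 k) + b k ^ 2 * QJ a1 a2 a3 (w1 k) (w2 k) (w3 k) +
    0 ^ 2 * QJ a1 a2 a3 0 0 0 + 2 * a k * b k * BJ a1 a2 a3 (v1 k) (v2 k) (v3 k) (w1 k) (w2 k) (w3 k) +
    2 * a k * 0 * BJ a1 a2 a3 (v1 k) (v2 k) (v3 k) 0 0 0 + 2 * b k * 0 * BJ a1 a2 a3 (w1 k) (w2 k) (w3 k) 0 0 0 - N)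
  with (a k ^ 2 * (QJ a1 a2 a3 (v1 k) (v2 k) (v3 k) - 1) + b k ^ 2 * (QJ a1 a2 a3 (w1 k) (w2 k) (w3 k) - -1)
        + 2 * a k * b k * BJ a1 a2 a3 (v1 k) (v2 k) (v3 k) (w1 k) (w2 k) (w3 k)
        + N * (2 * h k + 1) * (2 * h k - 1)) by (unfold a, b, QJ, BJ; ring).
  apply Z.divide_add_r; [apply Z.divide_add_r; [apply Z.divide_add_r|]|].
  - apply Z.divide_mul_r; tauto.
  - apply Z.divide_mul_r; tauto.
  - apply Z.divide_mul_r; tauto.
  - apply Z.divide_mul_r. replace (2 * h k - 1) with (2 * h k - 1) by ring. apply Hhk.
Qed.


Lemma prime_odd p : prime p -> p <> 2 -> p = 2 * ((p - 1) / 2) + 1.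
Proof.
  intros Hp H2. assert (p1 := prime_gt1 p Hp).
  assert (Hm : p mod 2 = 1).
  { assert (H := Z.mod_pos_bound p 2). destruct (Z.eq_dec (p mod 2) 0) as [E|E]; [|lia].
    exfalso. assert (D : (2 | p)) by (apply Z.mod_divide; lia).
    destruct (prime_divisors p Hp 2 D) as [?|[?|[?|?]]]; lia. }
  assert (E := Z.div_mod p 2 ltac:(lia)). rewrite Hm in E.
  replace ((p - 1) / 2) with (p / 2). lia.
  rewrite E at 2. replace (2 * (p / 2) + 1 - 1) with ((p/2) * 2) by ring. rewrite Z.div_mul; lia.
Qed.

Lemma eqmod_dvd p a b : 0 < p -> a mod p = b mod p -> (p | a - b).
Proof.
  intros Hp E. assert (Ea := Z.div_mod a p ltac:(lia)). assert (Eb := Z.div_mod b p ltac:(lia)).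
  exists (a / p - b / p). lia.
Qed.

Lemma dvd_eqm m a b : m <> 0 -> (m | a - b) -> eqm m a b.
Proof.
  intros Hm [k Hk]. unfold eqm. replace a with (b + k * m) by lia.
  apply Z_mod_plus_full.
Qed.

Lemma eqm_dvd m a b : 0 < m -> eqm m a b -> (m | a - b).
Proof. intros. apply eqmod_dvd; auto. Qed.

Lemma sq_inj p w x y : prime p -> ~ (p | w) -> 0 <= x <= (p - 1) / 2 -> 0 <= y <= (p - 1) / 2 ->
  (p | w * x ^ 2 - w * y ^ 2) -> x = y.
Proof.
  intros Hp Hw Hx Hy H. assert (p1 := prime_gt1 p Hp).
  assert (h2 : 2 * ((p - 1) / 2) <= p - 1) by (apply Z.mul_div_le; lia).
  replace (w * x ^ 2 - w * y ^ 2) with (w * ((x - y) * (x + y))) in H by ring.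
  destruct (prime_mult p Hp _ _ H) as [H1|H1]; [contradiction|].
  destruct (prime_mult p Hp _ _ H1) as [H2|H2].
  - apply dvd_small in H2; lia.
  - apply dvd_small in H2; lia.
Qed.

Definition zr (n : Z) : list Z := map Z.of_nat (seq 0 (Z.to_nat n)).

Lemma In_zr z n : In z (zr n) <-> 0 <= z < n.
Proof.
  unfold zr. rewrite in_map_iff. split.
  - intros [i [<- Hi]]. apply in_seq in Hi. lia.
  - intros H. exists (Z.to_nat z). split. lia. apply in_seq. lia.
Qed.

Lemma length_zr n : length (zr n) = Z.to_nat n.
Proof. unfold zr. rewrite length_map, length_seq. reflexivity. Qed.

Lemma NoDup_zr n : NoDup (zr n).
Proof.
  unfold zr. apply NoDup_map_NoDup_ForallPairs. intros a b _ _ E. lia. apply seq_NoDup.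
Qed.

Lemma pigeon p D N : prime p -> p <> 2 -> ~ (p | D) -> exists x y, (p | x ^ 2 - D * y ^ 2 - N).
Proof.
  intros Hp H2 HD. apply NNPP. intro Hno.
  assert (p1 := prime_gt1 p Hp). assert (Ho := prime_odd p Hp H2).
  set (h := (p - 1) / 2) in *.
  set (L1 := map (fun x => (x ^ 2) mod p) (zr (h + 1))).
  set (L2 := map (fun y => (N + D * y ^ 2) mod p) (zr (h + 1))).
  assert (ND : NoDup (L1 ++ L2)).
  { apply NoDup_app.
    - apply NoDup_map_NoDup_ForallPairs; [|apply NoDup_zr].
      intros a b Ha Hb E. apply In_zr in Ha. apply In_zr in Hb.
      apply (sq_inj p 1); auto; try lia. intro Q. apply Z.divide_pos_le in Q; lia.
      replace (1 * a ^ 2 - 1 * b ^ 2) with (a ^ 2 - b ^ 2) by ring. apply eqmod_dvd; lia.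
    - apply NoDup_map_NoDup_ForallPairs; [|apply NoDup_zr].
      intros a b Ha Hb E. apply In_zr in Ha. apply In_zr in Hb.
      apply (sq_inj p D); auto; try lia.
      replace (D * a ^ 2 - D * b ^ 2) with ((N + D * a ^ 2) - (N + D * b ^ 2)) by ring. apply eqmod_dvd; lia.
    - intros a Ha Hb. apply in_map_iff in Ha. apply in_map_iff in Hb.
      destruct Ha as [x [Ex _]]. destruct Hb as [y [Ey _]]. apply Hno. exists x, y.
      replace (x ^ 2 - D * y ^ 2 - N) with (x ^ 2 - (N + D * y ^ 2)) by ring. apply eqmod_dvd; lia. }
  assert (I : incl (L1 ++ L2) (zr p)).
  { intros a Ha. apply In_zr. apply in_app_or in Ha. destruct Ha as [Ha|Ha];
    apply in_map_iff in Ha; destruct Ha as [x [<- _]]; apply Z.mod_pos_bound; lia. }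
  assert (Le := NoDup_incl_length ND I).
  rewrite length_app in Le. unfold L1, L2 in Le. rewrite !length_map, !length_zr in Le. lia.
Qed.

Definition Bad (p w : Z) (e : bool) (N : Z) : Prop :=
  exists r M, N = p ^ Z.of_nat r * M /\ ~ (p | M) /\ Nat.odd r = e /\ ~ (exists z, (p | w * z ^ 2 - M)).

Lemma Bad_mul p w e q : prime p -> (Bad p w e (p * q) <-> Bad p w (negb e) q).
Proof.
  intros Hp. assert (p1 := prime_gt1 p Hp). split.
  - intros [r [M [E [HM [Ho Hn]]]]]. destruct r as [|r].
    + exfalso. apply HM. rewrite Z.pow_0_r, Z.mul_1_l in E. exists q. lia.
    + exists r, M. rewrite Nat2Z.inj_succ, Z.pow_succ_r in E by lia.
      repeat split; auto.
      * apply (Z.mul_reg_l _ _ p); lia.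
      * rewrite <- Ho. rewrite Nat.odd_succ, <- Nat.negb_odd, Bool.negb_involutive. reflexivity.
  - intros [r [M [E [HM [Ho Hn]]]]]. exists (S r), M.
    rewrite Nat2Z.inj_succ, Z.pow_succ_r by lia. repeat split; auto.
    + rewrite E. ring.
    + rewrite Nat.odd_succ, <- Nat.negb_odd, Ho. destruct e; reflexivity.
Qed.

Lemma Bad_unit p w e N : prime p -> ~ (p | N) ->
  (Bad p w e N <-> e = false /\ ~ (exists z, (p | w * z ^ 2 - N))).
Proof.
  intros Hp HN. split.
  - intros [r [M [E [HM [Ho Hn]]]]]. destruct r as [|r].
    + rewrite Z.pow_0_r, Z.mul_1_l in E. replace M with N in * by lia. auto.
    + exfalso. apply HN. rewrite E, Nat2Z.inj_succ, Z.pow_succ_r by lia.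
      exists (p ^ Z.of_nat r * M). ring.
  - intros [-> Hn]. exists 0%nat, N. repeat split; auto. change (Z.of_nat 0) with 0. ring.
Qed.

Lemma Bad_zero p w e : prime p -> ~ Bad p w e 0.
Proof.
  intros Hp [r [M [E [HM _]]]]. assert (p1 := prime_gt1 p Hp).
  assert (M = 0). { symmetry in E. apply Z.mul_eq_0 in E. destruct E; auto.
    exfalso. apply Z.pow_nonzero in H; lia. }
  subst. apply HM. apply Z.divide_0_r.
Qed.

Definition Rf (p D : Z) (eps : nat -> Z) (N : Z) : Prop :=
  exists z1 z2 z3, padic p z1 /\ padic p z2 /\ padic p z3 /\
    forall k, (ppow p k | z1 k ^ 2 - D * z2 k ^ 2 + p * eps k * z3 k ^ 2 - N).

Lemma Rf_zero p D eps : Rf p D eps 0.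
Proof.
  exists (fun _ => 0), (fun _ => 0), (fun _ => 0). repeat split; try apply padic_const.
  intro k. replace (0 ^ 2 - D * 0 ^ 2 + p * eps k * 0 ^ 2 - 0) with 0 by ring. apply Z.divide_0_r.
Qed.

Lemma Rf_scale p D eps N : Rf p D eps N -> Rf p D eps (p * (p * N)).
Proof.
  intros [z1 [z2 [z3 [H1 [H2 [H3 Hk]]]]]].
  exists (fun k => p * z1 k), (fun k => p * z2 k), (fun k => p * z3 k).
  repeat split; try (apply padic_mul; auto using padic_const).
  intro k. replace ((p * z1 k) ^ 2 - D * (p * z2 k) ^ 2 + p * eps k * (p * z3 k) ^ 2 - p * (p * N))
    with ((p * p) * (z1 k ^ 2 - D * z2 k ^ 2 + p * eps k * z3 k ^ 2 - N)) by ring.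
  apply Z.divide_mul_r. auto.
Qed.

Lemma Rf_unit p D eps N : prime p -> p <> 2 -> ~ (p | D) -> padic p eps -> ~ (p | N) -> Rf p D eps N.
Proof.
  intros Hp H2 HD He HN.
  destruct (pigeon p D N Hp H2 HD) as [x [y Hxy]].
  destruct (classic (p | x)) as [Px|Px].
  - assert (Py : ~ (p | y)).
    { intro Py. apply HN. replace N with (x * x - D * y * y - (x ^ 2 - D * y ^ 2 - N)) by ring.
      apply Z.divide_sub_r; auto. apply Z.divide_sub_r; apply Z.divide_mul_r; auto. }
    destruct (hensel p (fun _ => D) (fun _ => 0) (fun _ => N - x ^ 2) y Hp) as [z [Hz Hk]];
      try apply padic_const.
    + replace (D * y ^ 2 + 0 * y + (N - x ^ 2)) with (- (x ^ 2 - D * y ^ 2 - N)) by ring.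
      apply Z.divide_opp_r. auto.
    + replace (2 * D * y + 0) with (2 * (D * y)) by ring.
      apply prime_nd_mul; auto. apply prime_odd_not2; auto. apply prime_nd_mul; auto.
    + exists (fun _ => x), z, (fun _ => 0). repeat split; auto using padic_const.
      intro k. specialize (Hk k). simpl in Hk.
      replace (x ^ 2 - D * z k ^ 2 + p * eps k * 0 ^ 2 - N) with (- (D * z k ^ 2 + 0 * z k + (N - x ^ 2))) by ring.
      apply Z.divide_opp_r. auto.
  - destruct (hensel p (fun _ => 1) (fun _ => 0) (fun _ => - (N + D * y ^ 2)) x Hp) as [z [Hz Hk]];
      try apply padic_const.
    + replace (1 * x ^ 2 + 0 * x + - (N + D * y ^ 2)) with (x ^ 2 - D * y ^ 2 - N) by ring. auto.
    + replace (2 * 1 * x + 0) with (2 * x) by ring.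
      apply prime_nd_mul; auto. apply prime_odd_not2; auto.
    + exists z, (fun _ => y), (fun _ => 0). repeat split; auto using padic_const.
      intro k. specialize (Hk k). simpl in Hk.
      replace (z k ^ 2 - D * y ^ 2 + p * eps k * 0 ^ 2 - N) with (1 * z k ^ 2 + 0 * z k + - (N + D * y ^ 2)) by ring.
      auto.
Qed.

Lemma Rf_pN p D eps N z0 : prime p -> p <> 2 -> padic p eps -> ~ (p | eps 1%nat) -> ~ (p | N) ->
  (p | eps 1%nat * z0 ^ 2 - N) -> Rf p D eps (p * N).
Proof.
  intros Hp H2 He He1 HN Hz0.
  assert (Pz : ~ (p | z0)).
  { intro Pz. apply HN. replace N with (eps 1%nat * z0 * z0 - (eps 1%nat * z0 ^ 2 - N)) by ring.
    apply Z.divide_sub_r; auto. apply Z.divide_mul_r; auto. }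
  destruct (hensel p eps (fun _ => 0) (fun _ => - N) z0 Hp) as [z [Hz Hk]]; auto; try apply padic_const.
  - replace (eps 1%nat * z0 ^ 2 + 0 * z0 + - N) with (eps 1%nat * z0 ^ 2 - N) by ring. auto.
  - replace (2 * eps 1%nat * z0 + 0) with (2 * (eps 1%nat * z0)) by ring.
    apply prime_nd_mul; auto. apply prime_odd_not2; auto. apply prime_nd_mul; auto.
  - exists (fun _ => 0), (fun _ => 0), z. repeat split; auto using padic_const.
    intro k. specialize (Hk k). simpl in Hk.
    replace (0 ^ 2 - D * 0 ^ 2 + p * eps k * z k ^ 2 - p * N) with (p * (eps k * z k ^ 2 + 0 * z k + - N)) by ring.
    apply Z.divide_mul_r. auto.
Qed.

Lemma Rf_main p D eps : prime p -> p <> 2 -> ~ (p | D) -> padic p eps -> ~ (p | eps 1%nat) ->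
  forall N, (~ Bad p (eps 1%nat) true N -> Rf p D eps N) /\ (~ Bad p (eps 1%nat) false N -> Rf p D eps (p * N)).
Proof.
  intros Hp H2 HD He He1 N. assert (p1 := prime_gt1 p Hp).
  remember (Z.abs_nat N) as M eqn:HM. revert N HM.
  induction M as [M IH] using lt_wf_ind. intros N HM.
  destruct (Z.eq_dec N 0) as [->|N0].
  { rewrite Z.mul_0_r. split; intros; apply Rf_zero. }
  destruct (classic (p | N)) as [[q ->]|PN].
  - assert (q0 : q <> 0) by (intro; subst; lia).
    assert (Hlt : (Z.abs_nat q < M)%nat) by (subst; rewrite Zabs2Nat.inj_mul; nia).
    destruct (IH _ Hlt q eq_refl) as [IH1 IH2].
    rewrite Z.mul_comm. split; intro HB; rewrite Bad_mul in HB by auto.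
    + apply IH2. exact HB.
    + apply Rf_scale. apply IH1. exact HB.
  - split; intro HB.
    + apply Rf_unit; auto.
    + rewrite Bad_unit in HB by auto.
      assert (Ex : exists z, (p | eps 1%nat * z ^ 2 - N)) by (apply NNPP; intro; apply HB; auto).
      destruct Ex as [z Hz]. apply (Rf_pN p D eps N z); auto.
Qed.


Definition cgr (m a b : Z) : Prop := (m | a - b).

Global Instance cgr_equiv m : Equivalence (cgr m).
Proof.
  unfold cgr. constructor.
  - intro a. replace (a - a) with 0 by ring. apply Z.divide_0_r.
  - intros a b H. replace (b - a) with (- (a - b)) by ring. apply Z.divide_opp_r. auto.
  - intros a b c H1 H2. replace (a - c) with ((a - b) + (b - c)) by ring. apply Z.divide_add_r; auto.
Qed.

Global Instance cgr_add m : Proper (cgr m ==> cgr m ==> cgr m) Z.add.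
Proof.
  unfold cgr. intros a a' Ha b b' Hb. replace (a + b - (a' + b')) with ((a - a') + (b - b')) by ring.
  apply Z.divide_add_r; auto.
Qed.

Global Instance cgr_sub m : Proper (cgr m ==> cgr m ==> cgr m) Z.sub.
Proof.
  unfold cgr. intros a a' Ha b b' Hb. replace (a - b - (a' - b')) with ((a - a') - (b - b')) by ring.
  apply Z.divide_sub_r; auto.
Qed.

Global Instance cgr_mul m : Proper (cgr m ==> cgr m ==> cgr m) Z.mul.
Proof.
  unfold cgr. intros a a' Ha b b' Hb. replace (a * b - (a' * b')) with (a * (b - b') + b' * (a - a')) by ring.
  apply Z.divide_add_r; apply Z.divide_mul_r; auto.
Qed.

Global Instance cgr_opp m : Proper (cgr m ==> cgr m) Z.opp.
Proof.
  unfold cgr. intros a a' Ha. replace (- a - - a') with (- (a - a')) by ring. apply Z.divide_opp_r. auto.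
Qed.

Lemma p_dvd_ppow p k : (1 <= k)%nat -> (p | ppow p k).
Proof. intros. replace k with (1 + (k - 1))%nat by lia. rewrite ppow_add, ppow_1. apply Z.divide_factor_l. Qed.

Lemma rep_iso p c a1 a2 a3 al1 al2 al3 D N e11 e12 e13 e21 e22 e23 e31 e32 e33 eps :
  prime p -> p <> 2 -> ~ (p | c) -> ~ (p | D) ->
  padic p e11 -> padic p e12 -> padic p e13 ->
  padic p e21 -> padic p e22 -> padic p e23 ->
  padic p e31 -> padic p e32 -> padic p e33 ->
  padic p eps -> ~ (p | eps 1%nat) ->
  (forall k : nat,
      (ppow p k | QJ a1 a2 a3 (e11 k) (e12 k) (e13 k) - 1) /\
      (ppow p k | QJ a1 a2 a3 (e21 k) (e22 k) (e23 k) + D) /\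
      (ppow p k | QJ a1 a2 a3 (e31 k) (e32 k) (e33 k) - p * eps k) /\
      (ppow p k | BJ a1 a2 a3 (e11 k) (e12 k) (e13 k) (e21 k) (e22 k) (e23 k)) /\
      (ppow p k | BJ a1 a2 a3 (e11 k) (e12 k) (e13 k) (e31 k) (e32 k) (e33 k)) /\
      (ppow p k | BJ a1 a2 a3 (e21 k) (e22 k) (e23 k) (e31 k) (e32 k) (e33 k))) ->
  ~ Bad p (eps 1%nat) true N ->
  rep_Zp (CQP c a1 a2 a3 al1 al2 al3) p N.
Proof.
  intros Hp H2 Hc HD P11 P12 P13 P21 P22 P23 P31 P32 P33 Pe He1 Hk HB.
  destruct (proj1 (Rf_main p D eps Hp H2 HD Pe He1 N) HB) as [z1 [z2 [z3 [Z1 [Z2 [Z3 Hz]]]]]].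
  apply (from_J p c a1 a2 a3 al1 al2 al3 N
    (fun k => z1 k * e11 k + z2 k * e21 k + z3 k * e31 k)
    (fun k => z1 k * e12 k + z2 k * e22 k + z3 k * e32 k)
    (fun k => z1 k * e13 k + z2 k * e23 k + z3 k * e33 k)); auto;
    try (apply padic_add; [apply padic_add|]; apply padic_mul; auto).
  intro k. rewrite QJ_combo. destruct (Hk k) as [Q1 [Q2 [Q3 [B12 [B13 B23]]]]].
  specialize (Hz k).
  match goal with |- (_ | ?X) => replace X with
    (z1 k ^ 2 * (QJ a1 a2 a3 (e11 k) (e12 k) (e13 k) - 1)
     + z2 k ^ 2 * (QJ a1 a2 a3 (e21 k) (e22 k) (e23 k) + D)
     + z3 k ^ 2 * (QJ a1 a2 a3 (e31 k) (e32 k) (e33 k) - p * eps k)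
     + 2 * z1 k * z2 k * BJ a1 a2 a3 (e11 k) (e12 k) (e13 k) (e21 k) (e22 k) (e23 k)
     + 2 * z1 k * z3 k * BJ a1 a2 a3 (e11 k) (e12 k) (e13 k) (e31 k) (e32 k) (e33 k)
     + 2 * z2 k * z3 k * BJ a1 a2 a3 (e21 k) (e22 k) (e23 k) (e31 k) (e32 k) (e33 k)
     + (z1 k ^ 2 - D * z2 k ^ 2 + p * eps k * z3 k ^ 2 - N)) by ring end.
  apply Z.divide_add_r; [apply Z.divide_add_r; [apply Z.divide_add_r; [apply Z.divide_add_r;
    [apply Z.divide_add_r; [apply Z.divide_add_r|]|]|]|]|]; auto; apply Z.divide_mul_r; auto.
Qed.

Lemma descent p D e : prime p -> nonsquare_unit p D -> ~ (p | e) ->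
  forall j y1 y2 y3, (ppow p (2 * j) | y1 ^ 2 - D * y2 ^ 2 + p * e * y3 ^ 2) ->
  (ppow p j | y1) /\ (ppow p j | y2) /\ (ppow p j | y3).
Proof.
  intros Hp [HD Hns] He. assert (p1 := prime_gt1 p Hp).
  induction j as [|j IH]; intros y1 y2 y3 H.
  - rewrite ppow_0. repeat split; apply Z.divide_1_l.
  - assert (Hpd : (p | y1 ^ 2 - D * y2 ^ 2 + p * e * y3 ^ 2)).
    { apply Z.divide_trans with (ppow p (2 * S j)); auto. apply p_dvd_ppow. lia. }
    assert (H12 : (p | y1 ^ 2 - D * y2 ^ 2)).
    { replace (y1 ^ 2 - D * y2 ^ 2) with ((y1 ^ 2 - D * y2 ^ 2 + p * e * y3 ^ 2) - p * (e * y3 ^ 2)) by ring.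
      apply Z.divide_sub_r; auto. apply Z.divide_factor_l. }
    assert (Py2 : (p | y2)).
    { apply NNPP. intro Py2. destruct (lin_solve p y2 (-1) Hp Py2) as [v Hv].
      apply (Hns (y1 * v)).
      replace ((y1 * v) ^ 2 - D) with (v ^ 2 * (y1 ^ 2 - D * y2 ^ 2) + D * (-1 + v * y2) * (v * y2 + 1)) by ring.
      apply Z.divide_add_r. apply Z.divide_mul_r; auto. apply Z.divide_mul_l. apply Z.divide_mul_r. auto. }
    assert (Py1 : (p | y1)).
    { assert (Q : (p | y1 * y1)).
      { replace (y1 * y1) with ((y1 ^ 2 - D * y2 ^ 2) + D * y2 * y2) by ring.
        apply Z.divide_add_r; auto. apply Z.divide_mul_r; auto. }
      destruct (prime_mult p Hp _ _ Q); auto. }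
    destruct Py1 as [u1 ->]. destruct Py2 as [u2 ->].
    assert (Py3 : (p | y3)).
    { assert (Q : (p * p | p * (e * y3 ^ 2))).
      { replace (p * (e * y3 ^ 2)) with ((u1 * p) ^ 2 - D * (u2 * p) ^ 2 + p * e * y3 ^ 2 - p * p * (u1 ^ 2 - D * u2 ^ 2)) by ring.
        apply Z.divide_sub_r; [|apply Z.divide_factor_l].
        apply Z.divide_trans with (ppow p (2 * S j)); auto.
        replace (2 * S j)%nat with (2 + 2 * j)%nat by lia. rewrite ppow_add.
        replace (ppow p 2) with (p * p) by (rewrite !ppow_S, ppow_0; ring). apply Z.divide_factor_l. }
      apply Z.mul_divide_cancel_l in Q; [|lia].
      destruct (prime_mult p Hp _ _ Q) as [Q1|Q1]; [contradiction|].
      rewrite Z.pow_2_r in Q1. destruct (prime_mult p Hp _ _ Q1); auto. }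
    destruct Py3 as [u3 ->].
    assert (Hj : (ppow p (2 * j) | u1 ^ 2 - D * u2 ^ 2 + p * e * u3 ^ 2)).
    { apply (Z.mul_divide_cancel_l _ _ (p * p)); [lia|].
      replace (p * p * ppow p (2 * j)) with (ppow p (2 * S j)).
      replace (p * p * (u1 ^ 2 - D * u2 ^ 2 + p * e * u3 ^ 2)) with
        ((u1 * p) ^ 2 - D * (u2 * p) ^ 2 + p * e * (u3 * p) ^ 2) by ring. auto.
      replace (2 * S j)%nat with (S (S (2 * j))) by lia. rewrite !ppow_S. ring. }
    destruct (IH _ _ _ Hj) as [D1 [D2 D3]].
    rewrite ppow_S. repeat split; rewrite (Z.mul_comm p (ppow p j)); apply Z.mul_divide_mono_r; auto.
Qed.

Lemma nd_cong p a b : (p | a - b) -> ~ (p | b) -> ~ (p | a).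
Proof.
  intros H Hb Ha. apply Hb. replace b with (a - (a - b)) by ring. apply Z.divide_sub_r; auto.
Qed.

Lemma det3_cong p (x1 x2 x3 y1 y2 y3 z1 z2 z3 x1' x2' x3' y1' y2' y3' z1' z2' z3' : Z) :
  0 < p ->
  (p | x1 - x1') -> (p | x2 - x2') -> (p | x3 - x3') ->
  (p | y1 - y1') -> (p | y2 - y2') -> (p | y3 - y3') ->
  (p | z1 - z1') -> (p | z2 - z2') -> (p | z3 - z3') ->
  (p | det3 x1 x2 x3 y1 y2 y3 z1 z2 z3 - det3 x1' x2' x3' y1' y2' y3' z1' z2' z3').
Proof.
  intros Hp H1 H2 H3 H4 H5 H6 H7 H8 H9. change (cgr p (det3 x1 x2 x3 y1 y2 y3 z1 z2 z3) (det3 x1' x2' x3' y1' y2' y3' z1' z2' z3')).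
  change (cgr p x1 x1') in H1. change (cgr p x2 x2') in H2. change (cgr p x3 x3') in H3.
  change (cgr p y1 y1') in H4. change (cgr p y2 y2') in H5. change (cgr p y3 y3') in H6.
  change (cgr p z1 z1') in H7. change (cgr p z2 z2') in H8. change (cgr p z3 z3') in H9.
  unfold det3. rewrite H1, H2, H3, H4, H5, H6, H7, H8, H9. reflexivity.
Qed.


Lemma aniso_of_iso p a1 a2 a3 D e11 e12 e13 e21 e22 e23 e31 e32 e33 eps :
  prime p -> nonsquare_unit p D ->
  padic p e11 -> padic p e12 -> padic p e13 ->
  padic p e21 -> padic p e22 -> padic p e23 ->
  padic p e31 -> padic p e32 -> padic p e33 ->
  padic p eps -> ~ (p | eps 1%nat) ->
  ~ (p | det3 (e11 1%nat) (e12 1%nat) (e13 1%nat) (e21 1%nat) (e22 1%nat)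
               (e23 1%nat) (e31 1%nat) (e32 1%nat) (e33 1%nat)) ->
  (forall k : nat,
      (ppow p k | QJ a1 a2 a3 (e11 k) (e12 k) (e13 k) - 1) /\
      (ppow p k | QJ a1 a2 a3 (e21 k) (e22 k) (e23 k) + D) /\
      (ppow p k | QJ a1 a2 a3 (e31 k) (e32 k) (e33 k) - p * eps k) /\
      (ppow p k | BJ a1 a2 a3 (e11 k) (e12 k) (e13 k) (e21 k) (e22 k) (e23 k)) /\
      (ppow p k | BJ a1 a2 a3 (e11 k) (e12 k) (e13 k) (e31 k) (e32 k) (e33 k)) /\
      (ppow p k | BJ a1 a2 a3 (e21 k) (e22 k) (e23 k) (e31 k) (e32 k) (e33 k))) ->
  anisotropic p a1 a2 a3.
Proof.
  intros Hp HD P11 P12 P13 P21 P22 P23 P31 P32 P33 Pe He1 Hdet Hk.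
  intros [x1 [x2 [x3 [X1 [X2 [X3 [Hnz HQ]]]]]]].
  assert (p1 := prime_gt1 p Hp).
  assert (All : forall j, (ppow p j | x1 j) /\ (ppow p j | x2 j) /\ (ppow p j | x3 j)).
  { intro j. destruct j as [|j'].
    { rewrite ppow_0. repeat split; apply Z.divide_1_l. }
    set (K := (2 * S j')%nat).
    assert (HK1 : (1 <= K)%nat) by (unfold K; lia).
    assert (C : forall e, padic p e -> (p | e K - e 1%nat)).
    { intros e Pe'. assert (H := padic_le p e Pe' 1 K HK1). rewrite ppow_1 in H. exact H. }
    set (d := det3 (e11 K) (e12 K) (e13 K) (e21 K) (e22 K) (e23 K) (e31 K) (e32 K) (e33 K)).
    set (y1 := det3 (x1 K) (x2 K) (x3 K) (e21 K) (e22 K) (e23 K) (e31 K) (e32 K) (e33 K)).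
    set (y2 := det3 (e11 K) (e12 K) (e13 K) (x1 K) (x2 K) (x3 K) (e31 K) (e32 K) (e33 K)).
    set (y3 := det3 (e11 K) (e12 K) (e13 K) (e21 K) (e22 K) (e23 K) (x1 K) (x2 K) (x3 K)).
    assert (I1 : y1 * e11 K + y2 * e21 K + y3 * e31 K = d * x1 K) by (unfold y1, y2, y3, d, det3; ring).
    assert (I2 : y1 * e12 K + y2 * e22 K + y3 * e32 K = d * x2 K) by (unfold y1, y2, y3, d, det3; ring).
    assert (I3 : y1 * e13 K + y2 * e23 K + y3 * e33 K = d * x3 K) by (unfold y1, y2, y3, d, det3; ring).
    assert (Hd : ~ (p | d)).
    { apply (nd_cong p d _ (det3_cong p _ _ _ _ _ _ _ _ _ _ _ _ _ _ _ _ _ _ ltac:(lia)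
        (C _ P11) (C _ P12) (C _ P13) (C _ P21) (C _ P22) (C _ P23) (C _ P31) (C _ P32) (C _ P33))).
      exact Hdet. }
    assert (HeK : ~ (p | eps K)) by (apply (nd_cong p _ _ (C _ Pe)); exact He1).
    assert (HF : (ppow p (2 * S j') | y1 ^ 2 - D * y2 ^ 2 + p * eps K * y3 ^ 2)).
    { destruct (Hk K) as [Q1 [Q2 [Q3 [B12 [B13 B23]]]]].
      assert (E1 : d ^ 2 * QJ a1 a2 a3 (x1 K) (x2 K) (x3 K) = QJ a1 a2 a3 (d * x1 K) (d * x2 K) (d * x3 K))
        by (unfold QJ; ring).
      rewrite <- I1, <- I2, <- I3, QJ_combo in E1.
      fold K.
      match goal with |- (_ | ?X) => replace X with
        (d ^ 2 * QJ a1 a2 a3 (x1 K) (x2 K) (x3 K) -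
         (y1 ^ 2 * (QJ a1 a2 a3 (e11 K) (e12 K) (e13 K) - 1)
          + y2 ^ 2 * (QJ a1 a2 a3 (e21 K) (e22 K) (e23 K) + D)
          + y3 ^ 2 * (QJ a1 a2 a3 (e31 K) (e32 K) (e33 K) - p * eps K)
          + 2 * y1 * y2 * BJ a1 a2 a3 (e11 K) (e12 K) (e13 K) (e21 K) (e22 K) (e23 K)
          + 2 * y1 * y3 * BJ a1 a2 a3 (e11 K) (e12 K) (e13 K) (e31 K) (e32 K) (e33 K)
          + 2 * y2 * y3 * BJ a1 a2 a3 (e21 K) (e22 K) (e23 K) (e31 K) (e32 K) (e33 K)))
        by (rewrite E1; ring) end.
      apply Z.divide_sub_r. apply Z.divide_mul_r. apply HQ.
      apply Z.divide_add_r; [apply Z.divide_add_r; [apply Z.divide_add_r; [apply Z.divide_add_r;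
        [apply Z.divide_add_r|]|]|]|]; apply Z.divide_mul_r; auto. }
    destruct (descent p D (eps K) Hp HD HeK (S j') _ _ _ HF) as [D1 [D2 D3]].
    assert (RP : rel_prime (ppow p (S j')) d).
    { unfold ppow. apply rel_prime_sym. apply rel_prime_Zpower_r. lia.
      apply rel_prime_sym. apply prime_rel_prime; auto. }
    assert (G : forall x : nat -> Z, padic p x -> (ppow p (S j') | d * x K) -> (ppow p (S j') | x (S j'))).
    { intros x Px Hx. apply Gauss in Hx; auto.
      replace (x (S j')) with (x K - (x K - x (S j'))) by ring. apply Z.divide_sub_r; auto.
      apply padic_le; auto. unfold K; lia. }
    repeat split; apply G; auto.
    - rewrite <- I1. apply Z.divide_add_r; [apply Z.divide_add_r|]; apply Z.divide_mul_l; auto.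
    - rewrite <- I2. apply Z.divide_add_r; [apply Z.divide_add_r|]; apply Z.divide_mul_l; auto.
    - rewrite <- I3. apply Z.divide_add_r; [apply Z.divide_add_r|]; apply Z.divide_mul_l; auto. }
  destruct Hnz as [[k Hk']|[[k Hk']|[k Hk']]]; apply Hk'; apply All.
Qed.

Lemma rep_pc_helper p c a al D : prime p -> p <> 2 -> (p | c) -> ~ (p | a) -> ~ (p | al) ->
  exists x, padic p x /\ forall k, (ppow p k | a * (c * x k + al) ^ 2 - (a * al ^ 2 + c * D)).
Proof.
  intros Hp H2 Hc Ha Hal.
  assert (Hu : ~ (p | 2 * a * al)).
  { rewrite <- Z.mul_assoc. apply prime_nd_mul; auto. apply prime_odd_not2; auto. apply prime_nd_mul; auto. }
  destruct (lin_solve p (2 * a * al) (- D) Hp Hu) as [t Ht].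
  destruct (hensel p (fun _ => a * c) (fun _ => 2 * a * al) (fun _ => - D) t Hp) as [x [Hx Hk]];
    try apply padic_const.
  - replace (a * c * t ^ 2 + 2 * a * al * t + - D) with (c * (a * t ^ 2) + (- D + t * (2 * a * al))) by ring.
    apply Z.divide_add_r; auto. apply Z.divide_mul_l; auto.
  - apply (nd_cong p _ (2 * a * al)); auto.
    replace (2 * (a * c) * t + 2 * a * al - 2 * a * al) with (c * (2 * a * t)) by ring.
    apply Z.divide_mul_l; auto.
  - exists x. split; [exact Hx|]. intro k. specialize (Hk k). simpl in Hk.
    replace (a * (c * x k + al) ^ 2 - (a * al ^ 2 + c * D)) with (c * (a * c * x k ^ 2 + 2 * a * al * x k + - D)) by ring.
    apply Z.divide_mul_r. exact Hk.
Qed.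

Lemma rep_pc p c a1 a2 a3 al1 al2 al3 D : prime p -> p <> 2 -> (p | c) ->
  (~ (p | a1) \/ ~ (p | a2) \/ ~ (p | a3)) -> ~ (p | al1) -> ~ (p | al2) -> ~ (p | al3) ->
  rep_Zp (CQP c a1 a2 a3 al1 al2 al3) p (a1 * al1 ^ 2 + a2 * al2 ^ 2 + a3 * al3 ^ 2 + c * D).
Proof.
  intros Hp H2 Hc Ha H1 H2' H3.
  destruct Ha as [Ha|[Ha|Ha]].
  - destruct (rep_pc_helper p c a1 al1 D Hp H2 Hc Ha H1) as [x [Hx Hk]].
    exists x, (fun _ => 0), (fun _ => 0). repeat split; auto using padic_const.
    intro k. unfold gZ; cbn [qa1 qa2 qa3 qc qal1 qal2 qal3].
    match goal with |- (_ | ?X) => replace X with (a1 * (c * x k + al1) ^ 2 - (a1 * al1 ^ 2 + c * D)) by ring end.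
    auto.
  - destruct (rep_pc_helper p c a2 al2 D Hp H2 Hc Ha H2') as [x [Hx Hk]].
    exists (fun _ => 0), x, (fun _ => 0). repeat split; auto using padic_const.
    intro k. unfold gZ; cbn [qa1 qa2 qa3 qc qal1 qal2 qal3].
    match goal with |- (_ | ?X) => replace X with (a2 * (c * x k + al2) ^ 2 - (a2 * al2 ^ 2 + c * D)) by ring end.
    auto.
  - destruct (rep_pc_helper p c a3 al3 D Hp H2 Hc Ha H3) as [x [Hx Hk]].
    exists (fun _ => 0), (fun _ => 0), x. repeat split; auto using padic_const.
    intro k. unfold gZ; cbn [qa1 qa2 qa3 qc qal1 qal2 qal3].
    match goal with |- (_ | ?X) => replace X with (a3 * (c * x k + al3) ^ 2 - (a3 * al3 ^ 2 + c * D)) by ring end.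
    auto.
Qed.


Definition pb (P : Prop) : bool := if excluded_middle_informative P then true else false.

Lemma pb_true P : pb P = true <-> P.
Proof. unfold pb. destruct (excluded_middle_informative P); split; auto; discriminate. Qed.

Lemma pb_false P : pb P = false <-> ~ P.
Proof. unfold pb. destruct (excluded_middle_informative P); split; auto; try discriminate; tauto. Qed.

Definition cnt p w d e b L :=
  length (filter (fun i => pb (Bad p w e (d * Z.of_nat i + b))) (seq 0 L)).

Lemma filter_seq_shift (f : nat -> bool) s t L :
  length (filter f (seq (s + t) L)) = length (filter (fun i => f (s + i)%nat) (seq t L)).
Proof.
  revert t. induction L as [|L IH]; intro t; simpl; auto.
  replace (S (s + t)) with (s + S t)%nat by lia. destruct (f (s + t)%nat); simpl; rewrite IH; auto.
Qed.

Lemma cnt_split p w d e b L1 L2 :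
  cnt p w d e b (L1 + L2) = (cnt p w d e b L1 + cnt p w d e (b + d * Z.of_nat L1) L2)%nat.
Proof.
  unfold cnt. rewrite seq_app, filter_app, length_app. f_equal.
  replace (0 + L1)%nat with (L1 + 0)%nat by lia. rewrite filter_seq_shift.
  f_equal. apply filter_ext. intro i. f_equal. f_equal. lia.
Qed.

Lemma cnt_le p w d e b L : (cnt p w d e b L <= L)%nat.
Proof. unfold cnt. rewrite <- (length_seq L 0) at 2. apply filter_length_le. Qed.

Lemma cnt_0 p w d e b : cnt p w d e b 0 = 0%nat.
Proof. reflexivity. Qed.

Lemma cnt_1 p w d e b : cnt p w d e b 1 = if pb (Bad p w e b) then 1%nat else 0%nat.
Proof. unfold cnt. simpl. replace (d * 0 + b) with b by ring. destruct (pb _); reflexivity. Qed.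

Lemma res_unique p d i j : prime p -> ~ (p | d) -> (i < Z.to_nat p)%nat -> (j < Z.to_nat p)%nat ->
  (p | d * Z.of_nat i - d * Z.of_nat j) -> i = j.
Proof.
  intros Hp Hd Hi Hj H. assert (p1 := prime_gt1 p Hp).
  replace (d * Z.of_nat i - d * Z.of_nat j) with (d * (Z.of_nat i - Z.of_nat j)) in H by ring.
  destruct (prime_mult p Hp _ _ H) as [H1|H1]; [contradiction|].
  apply dvd_small in H1; lia.
Qed.

Lemma res_exists p d b t : prime p -> ~ (p | d) ->
  exists i, (i < Z.to_nat p)%nat /\ (p | d * Z.of_nat i + b - t).
Proof.
  intros Hp Hd. assert (p1 := prime_gt1 p Hp).
  destruct (lin_solve p d (b - t) Hp Hd) as [v Hv].
  exists (Z.to_nat (v mod p)). split.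
  - assert (H := Z.mod_pos_bound v p ltac:(lia)). lia.
  - rewrite Z2Nat.id by (apply Z.mod_pos_bound; lia).
    replace (d * (v mod p) + b - t) with ((b - t + v * d) - d * (p * (v / p))) .
    + apply Z.divide_sub_r; auto. apply Z.divide_mul_r. apply Z.divide_factor_l.
    + rewrite (Z.mod_eq v p) by lia. ring.
Qed.

Lemma block p w d e b i0 : prime p -> p <> 2 -> ~ (p | w) -> ~ (p | d) ->
  (i0 < Z.to_nat p)%nat -> (p | d * Z.of_nat i0 + b) ->
  (cnt p w d e b (Z.to_nat p) <=
     (if e then 0 else Z.to_nat ((p - 1) / 2)) + cnt p w d (negb e) ((d * Z.of_nat i0 + b) / p) 1)%nat.
Proof.
  intros Hp H2 Hw Hd Hi0 Hdiv. assert (p1 := prime_gt1 p Hp). assert (Ho := prime_odd p Hp H2).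
  set (h := (p - 1) / 2) in *. set (P := Z.to_nat p).
  destruct Hdiv as [b' Hb']. rewrite Hb', Z.div_mul by lia.
  assert (F1 : forall i, (i < P)%nat -> i <> i0 -> ~ (p | d * Z.of_nat i + b)).
  { intros i Hi Hne Hpi. apply Hne. apply (res_unique p d i i0 Hp Hd Hi Hi0).
    replace (d * Z.of_nat i - d * Z.of_nat i0) with ((d * Z.of_nat i + b) - (d * Z.of_nat i0 + b)) by ring.
    apply Z.divide_sub_r; auto. rewrite Hb'. apply Z.divide_factor_r. }
  assert (F2 : forall e', Bad p w e' (d * Z.of_nat i0 + b) <-> Bad p w (negb e') b').
  { intro e'. rewrite Hb', Z.mul_comm. apply Bad_mul; auto. }
  rewrite cnt_1. unfold cnt. fold P.
  set (f := fun i => pb (Bad p w e (d * Z.of_nat i + b))).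
  destruct e.
  -
    set (l0 := if pb (Bad p w (negb true) b') then [i0] else []).
    assert (I : incl (filter f (seq 0 P)) l0).
    { intros i Hi. apply filter_In in Hi. destruct Hi as [Hi Hf]. apply in_seq in Hi.
      unfold f in Hf. apply (proj1 (pb_true _)) in Hf.
      destruct (Nat.eq_dec i i0) as [->|Hne].
      - unfold l0. apply F2 in Hf. apply (proj2 (pb_true _)) in Hf. rewrite Hf. left; auto.
      - exfalso. apply Bad_unit in Hf; auto. destruct Hf; discriminate. apply F1; auto; lia. }
    assert (Le := NoDup_incl_length (NoDup_filter f (seq_NoDup P 0)) I).
    unfold l0 in Le. simpl in *. destruct (pb (Bad p w false b')); simpl in *; lia.
  -
    assert (IX : forall t, {i | (i < P)%nat /\ (p | d * Z.of_nat i + b - t)}).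
    { intro t. apply constructive_indefinite_description. apply res_exists; auto. }
    set (ixf := fun t => proj1_sig (IX t)).
    assert (IXa : forall t, (ixf t < P)%nat) by (intro t; exact (proj1 (proj2_sig (IX t)))).
    assert (IXb : forall t, (p | d * Z.of_nat (ixf t) + b - t)) by (intro t; exact (proj2 (proj2_sig (IX t)))).
    set (xs := map Z.of_nat (seq 1 (Z.to_nat h))).
    assert (Ixs : forall x, In x xs -> 1 <= x <= h).
    { intros x Hx. unfold xs in Hx. apply in_map_iff in Hx. destruct Hx as [k [<- Hk]]. apply in_seq in Hk. lia. }
    assert (Px : forall x, In x xs -> ~ (p | x)).
    { intros x Hx Hpx. apply Ixs in Hx. apply dvd_small in Hpx; lia. }
    set (l0 := (if pb (Bad p w (negb false) b') then [] else [i0]) ++ map (fun x => ixf (w * x ^ 2)) xs).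
    assert (I : incl l0 (filter (fun x => negb (f x)) (seq 0 P))).
    { intros i Hi. apply filter_In. unfold l0 in Hi. apply in_app_or in Hi. destruct Hi as [Hi|Hi].
      - destruct (pb (Bad p w (negb false) b')) eqn:E; [destruct Hi|].
        destruct Hi as [<-|[]]. split. apply in_seq; lia.
        unfold f. apply Bool.negb_true_iff. apply pb_false. rewrite F2. apply pb_false. exact E.
      - apply in_map_iff in Hi. destruct Hi as [x [<- Hx]]. split. apply in_seq. split; [lia| apply IXa].
        unfold f. apply Bool.negb_true_iff. apply pb_false.
        assert (Hu : ~ (p | d * Z.of_nat (ixf (w * x ^ 2)) + b)).
        { intro Hq. apply (prime_nd_mul p w (x ^ 2) Hp Hw (prime_nd_sq p x Hp (Px x Hx))).
          replace (w * x ^ 2) with ((d * Z.of_nat (ixf (w * x ^ 2)) + b) - (d * Z.of_nat (ixf (w * x ^ 2)) + b - w * x ^ 2)) by ring.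
          apply Z.divide_sub_r; auto. }
        rewrite Bad_unit; auto. intros [_ Hn]. apply Hn. exists x.
        replace (w * x ^ 2 - (d * Z.of_nat (ixf (w * x ^ 2)) + b)) with (- (d * Z.of_nat (ixf (w * x ^ 2)) + b - w * x ^ 2)) by ring.
        apply Z.divide_opp_r. auto. }
    assert (ND : NoDup l0).
    { unfold l0. apply NoDup_app.
      - destruct (pb _); constructor; auto. constructor.
      - apply NoDup_map_NoDup_ForallPairs.
        + intros x y Hx Hy E. apply (sq_inj p w); auto; try (apply Ixs in Hx; lia); try (apply Ixs in Hy; lia).
          replace (w * x ^ 2 - w * y ^ 2) with
            ((d * Z.of_nat (ixf (w * y ^ 2)) + b - w * y ^ 2) - (d * Z.of_nat (ixf (w * x ^ 2)) + b - w * x ^ 2))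
            by (rewrite E; ring).
          apply Z.divide_sub_r; auto.
        + unfold xs. apply NoDup_map_NoDup_ForallPairs. intros a c _ _ E. lia. apply seq_NoDup.
      - intros a Ha Hb. destruct (pb _); [destruct Ha|]. destruct Ha as [<-|[]].
        apply in_map_iff in Hb. destruct Hb as [x [Ex Hx]].
        apply (prime_nd_mul p w (x ^ 2) Hp Hw (prime_nd_sq p x Hp (Px x Hx))).
        replace (w * x ^ 2) with ((d * Z.of_nat (ixf (w * x ^ 2)) + b) - (d * Z.of_nat (ixf (w * x ^ 2)) + b - w * x ^ 2)) by ring.
        apply Z.divide_sub_r; auto. rewrite Ex, Hb'. apply Z.divide_factor_r. }
    assert (Le := NoDup_incl_length ND I).
    assert (FL := filter_length f (seq 0 P)). rewrite length_seq in FL.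
    unfold l0 in Le. rewrite length_app, length_map in Le. unfold xs in Le. rewrite length_map, length_seq in Le.
    assert (HP : P = (2 * Z.to_nat h + 1)%nat) by (unfold P; lia).
    simpl in *. destruct (pb (Bad p w true b')); simpl in *; lia.
Qed.

Lemma blocks p w d e b i0 L : prime p -> p <> 2 -> ~ (p | w) -> ~ (p | d) ->
  (i0 < Z.to_nat p)%nat -> (p | d * Z.of_nat i0 + b) ->
  (cnt p w d e b (Z.to_nat p * L) <=
     (if e then 0 else L * Z.to_nat ((p - 1) / 2)) + cnt p w d (negb e) ((d * Z.of_nat i0 + b) / p) L)%nat.
Proof.
  intros Hp H2 Hw Hd Hi0. assert (p1 := prime_gt1 p Hp). revert b.
  induction L as [|L IH]; intros b Hdiv.
  - rewrite Nat.mul_0_r. unfold cnt. simpl. lia.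
  - replace (Z.to_nat p * S L)%nat with (Z.to_nat p + Z.to_nat p * L)%nat by lia.
    rewrite cnt_split. replace (S L) with (1 + L)%nat by lia. rewrite (cnt_split _ _ _ _ _ 1 L).
    assert (B1 := block p w d e b i0 Hp H2 Hw Hd Hi0 Hdiv).
    assert (Hdiv2 : (p | d * Z.of_nat i0 + (b + d * Z.of_nat (Z.to_nat p)))).
    { rewrite Z2Nat.id by lia. replace (d * Z.of_nat i0 + (b + d * p)) with ((d * Z.of_nat i0 + b) + d * p) by ring.
      apply Z.divide_add_r; auto. apply Z.divide_factor_r. }
    assert (B2 := IH _ Hdiv2).
    replace ((d * Z.of_nat i0 + (b + d * Z.of_nat (Z.to_nat p))) / p) with
      ((d * Z.of_nat i0 + b) / p + d * Z.of_nat 1) in B2.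
    + destruct e; simpl in *; lia.
    + rewrite Z2Nat.id by lia. replace (d * Z.of_nat i0 + (b + d * p)) with ((d * Z.of_nat i0 + b) + d * p) by ring.
      rewrite Z_div_plus_full by lia. simpl. ring.
Qed.

Fixpoint Gf (p : Z) (s : nat) : Z :=
  match s with
  | O => 1
  | S s' => p ^ Z.of_nat s' * ((p - 1) / 2) + (match s' with O => 1 | S s'' => Gf p s'' end)
  end.

Definition Gt (p : Z) (s : nat) : Z := match s with O => 1 | S s' => Gf p s' end.

Definition GG p (e : bool) s := if e then Gt p s else Gf p s.

Lemma Gf_S p s : Gf p (S s) = p ^ Z.of_nat s * ((p - 1) / 2) + Gt p s.
Proof. destruct s; reflexivity. Qed.

Lemma cnt_pow p w d : prime p -> p <> 2 -> ~ (p | w) -> ~ (p | d) ->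
  forall s e b, Z.of_nat (cnt p w d e b (Z.to_nat p ^ s)) <= GG p e s.
Proof.
  intros Hp H2 Hw Hd. assert (p1 := prime_gt1 p Hp). assert (Ho := prime_odd p Hp H2).
  induction s as [|s IH]; intros e b.
  - simpl. assert (H := cnt_le p w d e b 1). destruct e; simpl; lia.
  - destruct (res_exists p d b 0 Hp Hd) as [i0 [Hi0 Hdiv]]. rewrite Z.sub_0_r in Hdiv.
    rewrite Nat.pow_succ_r'.
    assert (B := blocks p w d e b i0 (Z.to_nat p ^ s) Hp H2 Hw Hd Hi0 Hdiv).
    assert (I := IH (negb e) ((d * Z.of_nat i0 + b) / p)).
    destruct e; unfold GG in *; cbn [negb] in *.
    + unfold Gt. lia.
    + rewrite Gf_S.
      assert (E : Z.of_nat (Z.to_nat p ^ s * Z.to_nat ((p - 1) / 2)) = p ^ Z.of_nat s * ((p - 1) / 2)).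
      { rewrite Nat2Z.inj_mul, Nat2Z.inj_pow, !Z2Nat.id; lia. }
      lia.
Qed.

Lemma cnt_mult p w d : prime p -> p <> 2 -> ~ (p | w) -> ~ (p | d) ->
  forall c s e b, Z.of_nat (cnt p w d e b (c * Z.to_nat p ^ s)) <= Z.of_nat c * GG p e s.
Proof.
  intros Hp H2 Hw Hd c. induction c as [|c IH]; intros s e b.
  - simpl. lia.
  - simpl (S c * _)%nat. rewrite cnt_split. rewrite Nat2Z.inj_add.
    assert (A := cnt_pow p w d Hp H2 Hw Hd s e b). assert (B := IH s e (b + d * Z.of_nat (Z.to_nat p ^ s))).
    lia.
Qed.

Definition Sn p q j f := fold_right Z.add 0 (map (fun i => digit p q i * Gf p i) (seq j f)).

Lemma digit_nonneg p q i : 1 < p -> 0 <= digit p q i.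
Proof. intros. unfold digit. apply Z.mod_pos_bound. lia. Qed.

Lemma cnt_digits p w d q : prime p -> p <> 2 -> ~ (p | w) -> ~ (p | d) -> 0 <= q ->
  forall f j b, q < p ^ Z.of_nat (j + f) ->
  Z.of_nat (cnt p w d false b (Z.to_nat (q / p ^ Z.of_nat j) * Z.to_nat p ^ j)) <= Sn p q j f.
Proof.
  intros Hp H2 Hw Hd Hq. assert (p1 := prime_gt1 p Hp).
  induction f as [|f IH]; intros j b Hlt.
  - rewrite Nat.add_0_r in Hlt. rewrite Z.div_small by lia. change (Z.to_nat 0) with 0%nat. rewrite Nat.mul_0_l, cnt_0. unfold Sn. simpl. lia.
  - assert (Hpj : 0 < p ^ Z.of_nat j) by (apply Z.pow_pos_nonneg; lia).
    assert (E1 : q / p ^ Z.of_nat j = p * (q / p ^ Z.of_nat (S j)) + digit p q j).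
    { unfold digit. rewrite (Z.div_mod (q / p ^ Z.of_nat j) p) at 1 by lia.
      rewrite Z.div_div by lia. rewrite Nat2Z.inj_succ, Z.pow_succ_r by lia. rewrite (Z.mul_comm (p ^ Z.of_nat j) p). ring. }
    assert (Hd0 := digit_nonneg p q j p1).
    assert (Hq1 : 0 <= q / p ^ Z.of_nat (S j)) by (apply Z.div_pos; [lia| apply Z.pow_pos_nonneg; lia]).
    assert (E2 : (Z.to_nat (q / p ^ Z.of_nat j) * Z.to_nat p ^ j =
                  Z.to_nat (digit p q j) * Z.to_nat p ^ j + Z.to_nat (q / p ^ Z.of_nat (S j)) * Z.to_nat p ^ S j)%nat).
    { apply Nat2Z.inj. rewrite !Nat2Z.inj_add, !Nat2Z.inj_mul, !Nat2Z.inj_pow, !Z2Nat.id; try lia.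
      rewrite E1. rewrite Nat2Z.inj_succ, Z.pow_succ_r by lia. ring. }
    rewrite E2, cnt_split, Nat2Z.inj_add.
    assert (A := cnt_mult p w d Hp H2 Hw Hd (Z.to_nat (digit p q j)) j false b).
    rewrite Z2Nat.id in A by lia.
    assert (B := IH (S j) (b + d * Z.of_nat (Z.to_nat (digit p q j) * Z.to_nat p ^ j))
                    ltac:(replace (S j + f)%nat with (j + S f)%nat by lia; exact Hlt)).
    assert (ES : Sn p q j (S f) = digit p q j * Gf p j + Sn p q (S j) f) by reflexivity. rewrite ES. unfold GG in A. lia.
Qed.

Lemma cnt_small p w d b r : prime p -> p <> 2 -> ~ (p | w) -> ~ (p | d) -> (r < Z.to_nat p)%nat ->
  (cnt p w d true b r <= if Nat.eqb r 0 then 0 else 1)%nat.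
Proof.
  intros Hp H2 Hw Hd Hr. destruct r as [|r]. { rewrite cnt_0. simpl. lia. }
  simpl.
  destruct (res_exists p d b 0 Hp Hd) as [i0 [Hi0 Hdiv]]. rewrite Z.sub_0_r in Hdiv.
  assert (B := block p w d true b i0 Hp H2 Hw Hd Hi0 Hdiv).
  assert (EP : Z.to_nat p = (S r + (Z.to_nat p - S r))%nat) by lia.
  rewrite EP in B at 1. rewrite cnt_split in B. assert (C := cnt_le p w d false ((d * Z.of_nat i0 + b) / p) 1).
  simpl in B. lia.
Qed.

Lemma cnt_final p w d b n : prime p -> p <> 2 -> ~ (p | w) -> ~ (p | d) -> 0 <= n ->
  Z.of_nat (cnt p w d true b (Z.to_nat n)) <= (if n mod p =? 0 then 0 else 1) + Sn p (n / p) 0 (Z.to_nat n).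
Proof.
  intros Hp H2 Hw Hd Hn. assert (p1 := prime_gt1 p Hp).
  assert (Hm := Z.mod_pos_bound n p ltac:(lia)).
  assert (Hq : 0 <= n / p) by (apply Z.div_pos; lia).
  assert (E : Z.to_nat n = (Z.to_nat p * Z.to_nat (n / p) + Z.to_nat (n mod p))%nat).
  { apply Nat2Z.inj. rewrite Nat2Z.inj_add, Nat2Z.inj_mul, !Z2Nat.id; try lia.
    apply Z.div_mod. lia. }
  rewrite E at 1. rewrite cnt_split, Nat2Z.inj_add.
  destruct (res_exists p d b 0 Hp Hd) as [i0 [Hi0 Hdiv]]. rewrite Z.sub_0_r in Hdiv.
  assert (B := blocks p w d true b i0 (Z.to_nat (n / p)) Hp H2 Hw Hd Hi0 Hdiv). simpl in B.
  assert (D := cnt_digits p w d (n / p) Hp H2 Hw Hd Hq (Z.to_nat n) 0 ((d * Z.of_nat i0 + b) / p)).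
  rewrite Z.pow_0_r, Z.div_1_r, Nat.pow_0_r, Nat.mul_1_r in D.
  assert (Hlt : n / p < p ^ Z.of_nat (0 + Z.to_nat n)).
  { simpl. rewrite Z2Nat.id by lia. apply Z.le_lt_trans with n.
    apply Z.div_le_upper_bound; nia. apply Z.pow_gt_lin_r; lia. }
  specialize (D Hlt).
  assert (S := cnt_small p w d (b + d * Z.of_nat (Z.to_nat p * Z.to_nat (n / p))) (Z.to_nat (n mod p)) Hp H2 Hw Hd
    ltac:(lia)).
  destruct (n mod p =? 0) eqn:Em.
  - apply Z.eqb_eq in Em. rewrite Em. change (Z.to_nat 0) with 0%nat. rewrite cnt_0. lia.
  - apply Z.eqb_neq in Em. destruct (Nat.eqb (Z.to_nat (n mod p)) 0) eqn:E2.
    + apply Nat.eqb_eq in E2. lia.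
    + lia.
Qed.


Lemma Gf_psi p : prime p -> p <> 2 -> forall s, IZR (Gf p s) = psi_pow p (S s).
Proof.
  intros Hp H2. assert (p1 := prime_gt1 p Hp). assert (Ho := prime_odd p Hp H2).
  set (h := (p - 1) / 2) in *.
  assert (Hh : IZR p = (2 * IZR h + 1)%R) by (rewrite Ho at 1; rewrite plus_IZR, mult_IZR; reflexivity).
  assert (Hp2 : (2 * IZR p + 2 <> 0)%R) by (apply IZR_lt in p1; lra).
  assert (Two : forall s, IZR (Gf p s) = psi_pow p (S s) /\ IZR (Gf p (S s)) = psi_pow p (S (S s))).
  { induction s as [|s [IH1 IH2]].
    - split.
      + unfold psi_pow. simpl. field. lra.
      + unfold psi_pow. simpl Nat.odd. cbv iota. change (Gf p 1) with (p ^ Z.of_nat 0 * h + 1). rewrite plus_IZR, mult_IZR, <- pow_IZR.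
        change (Nat.odd 2) with false. cbv iota. rewrite Hh. field. rewrite <- Hh. exact Hp2.
    - split; auto.
      change (Gf p (S (S s))) with (p ^ Z.of_nat (S s) * h + Gf p s).
      rewrite plus_IZR, mult_IZR, IH1, <- pow_IZR.
      unfold psi_pow.
      replace (Nat.odd (S (S (S s)))) with (Nat.odd (S s)).
      2: { reflexivity. }
      replace (IZR p ^ S (S (S s)))%R with (IZR p ^ S s * (IZR p * IZR p))%R by (simpl; ring).
      destruct (Nat.odd (S s)); field_simplify_eq; auto; rewrite Hh; ring. }
  intro s. apply Two.
Qed.

Lemma digit_S p n i : 1 < p -> digit p n (S i) = digit p (n / p) i.
Proof.
  intros. unfold digit. rewrite Z.div_div by (try apply Z.pow_pos_nonneg; lia).
  rewrite Nat2Z.inj_succ, Z.pow_succ_r by lia. reflexivity.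
Qed.

Lemma Sn_R p n : prime p -> p <> 2 -> forall f j,
  IZR (Sn p (n / p) j f) = fold_right Rplus 0%R (map (fun i => (IZR (digit p n i) * psi_pow p i)%R) (seq (S j) f)).
Proof.
  intros Hp H2. assert (p1 := prime_gt1 p Hp). induction f as [|f IH]; intro j.
  - reflexivity.
  - change (Sn p (n / p) j (S f)) with (digit p (n / p) j * Gf p j + Sn p (n / p) (S j) f).
    rewrite plus_IZR, mult_IZR, IH, Gf_psi by auto. simpl. rewrite digit_S by auto. reflexivity.
Qed.

Lemma psi_bound p w d b n : prime p -> p <> 2 -> ~ (p | w) -> ~ (p | d) -> 0 <= n ->
  (INR (cnt p w d true b (Z.to_nat n)) <= psi p n)%R.
Proof.
  intros Hp H2 Hw Hd Hn. assert (p1 := prime_gt1 p Hp).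
  assert (C := cnt_final p w d b n Hp H2 Hw Hd Hn).
  apply IZR_le in C. rewrite <- INR_IZR_INZ in C. eapply Rle_trans; [exact C|].
  unfold psi. rewrite plus_IZR, Sn_R by auto.
  replace (digit p n 0) with (n mod p).
  - destruct (n mod p =? 0); simpl; lra.
  - unfold digit. simpl. rewrite Z.div_1_r. reflexivity.
Qed.

Lemma filter_map_len {A B} (f : B -> bool) (g : A -> B) l :
  length (filter f (map g l)) = length (filter (fun x => f (g x)) l).
Proof. induction l; simpl; auto. destruct (f (g a)); simpl; auto. Qed.

Lemma count_zr p w d b n : prime p -> p <> 2 -> ~ (p | w) -> ~ (p | d) -> 0 <= n ->
  (INR (length (filter (fun u => pb (Bad p w true (d * u + b))) (zr n))) <= psi p n)%R.
Proof.
  intros. unfold zr. rewrite filter_map_len. apply psi_bound; auto.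
Qed.

Lemma psi_nonneg p n : 5 <= p -> (0 <= psi p n)%R.
Proof.
  intros H5. unfold psi.
  assert (F : forall l, (0 <= fold_right Rplus 0 (map (fun i => IZR (digit p n i) * psi_pow p i) l))%R).
  { induction l; simpl. lra. apply Rplus_le_le_0_compat; auto.
    apply Rmult_le_pos. apply IZR_le. apply digit_nonneg. lia.
    assert (P0 : (0 <= IZR p ^ a)%R) by (apply pow_le; apply IZR_le; lia).
    assert (P5 : (5 <= IZR p)%R) by (apply IZR_le; lia).
    unfold psi_pow. destruct (Nat.odd a); apply Rle_mult_inv_pos; lra. }
  apply Rplus_le_le_0_compat; auto. destruct (Z.eqb _ _); lra.
Qed.


Lemma prime_divisor_exists n : 1 < n -> exists q, prime q /\ (q | n).
Proof.
  remember (Z.to_nat n) as k eqn:Hk. revert n Hk.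
  induction k as [k IH] using lt_wf_ind. intros n Hk Hn.
  destruct (prime_dec n) as [P|P]. { exists n. split; auto. apply Z.divide_refl. }
  destruct (not_prime_divide n Hn P) as [m [Hm Hmn]].
  destruct (IH (Z.to_nat m) ltac:(lia) m eq_refl ltac:(lia)) as [q [Hq Hqm]].
  exists q. split; auto. apply Z.divide_trans with m; auto.
Qed.

Fixpoint factZ (k : nat) : Z := match k with O => 1 | S k' => Z.of_nat (S k') * factZ k' end.

Lemma factZ_pos k : 0 < factZ k.
Proof. induction k; [simpl; lia|]. change (factZ (S k)) with (Z.of_nat (S k) * factZ k). apply Z.mul_pos_pos; lia. Qed.

Lemma factZ_dvd i k : (1 <= i <= k)%nat -> (Z.of_nat i | factZ k).
Proof.
  induction k as [|k IH]; intros H; [lia|].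
  change (factZ (S k)) with (Z.of_nat (S k) * factZ k). destruct (Nat.eq_dec i (S k)) as [->|Ne].
  - apply Z.divide_factor_l.
  - apply Z.divide_mul_r. apply IH. lia.
Qed.

Lemma prime_above M : exists q, prime q /\ M < q.
Proof.
  assert (F := factZ_pos (Z.to_nat M)).
  destruct (prime_divisor_exists (factZ (Z.to_nat M) + 1) ltac:(lia)) as [q [Hq Hd]].
  exists q. split; auto. assert (q1 := prime_gt1 q Hq).
  destruct (Z_lt_le_dec M q) as [|Hle]; auto. exfalso.
  assert (D : (q | factZ (Z.to_nat M))).
  { replace q with (Z.of_nat (Z.to_nat q)) by lia. apply factZ_dvd. lia. }
  assert (D1 : (q | 1)).
  { replace 1 with (factZ (Z.to_nat M) + 1 - factZ (Z.to_nat M)) by ring. apply Z.divide_sub_r; auto. }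
  apply Z.divide_pos_le in D1; lia.
Qed.

Definition bnd (l : list Z) : Z := fold_right (fun x a => Z.abs x + a) 5 l.

Lemma bnd_ge l : 5 <= bnd l.
Proof. induction l; simpl; lia. Qed.

Lemma bnd_in l x : In x l -> x <= bnd l.
Proof. induction l as [|a l IH]; simpl; intros H; [destruct H|]. assert (B := bnd_ge l). destruct H as [->|H]; [lia|]. apply IH in H. lia. Qed.

Lemma extend k : forall l : list Z, NoDup l ->
  exists ex, length ex = k /\ NoDup (l ++ ex) /\ forall p, In p ex -> prime p /\ 5 <= p.
Proof.
  induction k as [|k IH]; intros l Hl.
  - exists []. rewrite app_nil_r. split; [reflexivity|]. split; [exact Hl|]. intros r [].
  - destruct (prime_above (bnd l)) as [q [Hq Hql]].
    assert (Nq : ~ In q l) by (intro H; apply bnd_in in H; lia).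
    assert (Hl' : NoDup (l ++ [q])).
    { apply NoDup_app; auto. repeat constructor. auto. intros a Ha [<-|[]]. auto. }
    destruct (IH _ Hl') as [ex [E1 [E2 E3]]].
    exists (q :: ex). split; [simpl; auto|]. split.
    + rewrite <- app_assoc in E2. exact E2.
    + intros r [<-|Hr]; [|apply E3; auto]. assert (B := bnd_ge l). split; [auto|lia].
Qed.

Lemma fold_Rplus_app l1 l2 :
  fold_right Rplus 0%R (l1 ++ l2) = (fold_right Rplus 0%R l1 + fold_right Rplus 0%R l2)%R.
Proof. induction l1; simpl; [ring|]. rewrite IHl1. ring. Qed.

Lemma combineB (Ps : list Z) (good : Z -> Z -> Prop) n : 0 <= n ->
  (forall p, In p Ps -> exists Bp : Z -> Prop, (forall u, 0 <= u -> ~ Bp u -> good p u) /\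
     (INR (length (filter (fun u => pb (Bp u)) (zr n))) <= psi p n)%R) ->
  exists L, NoDup L /\ (forall u, In u L -> In u (zr n) /\ forall p, In p Ps -> good p u) /\
    (IZR n - fold_right Rplus 0%R (map (fun p => psi p n) Ps) <= INR (length L))%R.
Proof.
  intros Hn. induction Ps as [|p Ps IH]; intros H.
  - exists (zr n). split; [apply NoDup_zr|]. split; [intros u Hu; split; [auto| intros q []]|].
    simpl. rewrite length_zr, INR_IZR_INZ, Z2Nat.id by lia. lra.
  - destruct IH as [L [ND [HL Hlen]]]. { intros q Hq. apply H. right; auto. }
    destruct (H p (or_introl eq_refl)) as [Bp [Hg Hc]].
    exists (filter (fun u => negb (pb (Bp u))) L). split; [|split].
    + apply NoDup_filter; auto.
    + intros u Hu. apply filter_In in Hu. destruct Hu as [Hu Hb]. split; [apply HL; auto|].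
      intros q [<-|Hq].
      * apply Hg. apply HL in Hu. destruct Hu as [Hu _]. apply In_zr in Hu. lia.
        apply Bool.negb_true_iff in Hb. apply pb_false in Hb. exact Hb.
      * apply HL; auto.
    + assert (FL := filter_length (fun u => pb (Bp u)) L).
      assert (I : incl (filter (fun u => pb (Bp u)) L) (filter (fun u => pb (Bp u)) (zr n))).
      { intros u Hu. apply filter_In in Hu. apply filter_In. split; [apply HL|]; tauto. }
      assert (Le := NoDup_incl_length (NoDup_filter _ ND) I).
      apply le_INR in Le. apply (f_equal INR) in FL. rewrite plus_INR in FL.
      simpl map. simpl fold_right. lra.
Qed.


Lemma prime_cases q : prime q -> q = 2 \/ q = 3 \/ 5 <= q.
Proof.
  intros Hq. assert (q1 := prime_gt1 q Hq).
  destruct (Z.eq_dec q 4) as [->|]; [|lia].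
  exfalso. destruct (prime_divisors 4 Hq 2 ltac:(exists 2; reflexivity)) as [?|[?|[?|?]]]; lia.
Qed.

Lemma delta_cases m : delta_m m = 1 \/ delta_m m = 2 \/ delta_m m = 4.
Proof. unfold delta_m. destruct (Z.odd m); [auto|]. destruct (_ =? 2); auto. Qed.

Lemma nd_gcd1 p a b : prime p -> Z.gcd a b = 1 -> (p | a) -> ~ (p | b).
Proof.
  intros Hp G Ha Hb. assert (D := Z.gcd_greatest a b p Ha Hb). rewrite G in D.
  assert (p1 := prime_gt1 p Hp). apply Z.divide_pos_le in D; lia.
Qed.

Lemma filter_false_len (l : list Z) : length (filter (fun _ : Z => pb False) l) = 0%nat.
Proof.
  induction l; simpl; auto. destruct (pb False) eqn:E; auto. apply (proj1 (pb_true _)) in E. destruct E.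
Qed.

Lemma fold_psi_nonneg n (l : list Z) : (forall p, In p l -> 5 <= p) ->
  (0 <= fold_right Rplus 0%R (map (fun p => psi p n) l))%R.
Proof.
  induction l; simpl; intros H. lra.
  apply Rplus_le_le_0_compat. apply psi_nonneg. apply H; auto. apply IHl. intros; apply H; auto.
Qed.

Lemma repR c a1 a2 a3 al1 al2 al3 N : 0 < c -> 0 < a1 -> 0 <= N -> rep_R (CQP c a1 a2 a3 al1 al2 al3) N.
Proof.
  intros Hc Ha HN. apply IZR_lt in Hc. apply IZR_lt in Ha. apply IZR_le in HN.
  exists ((sqrt (IZR N / IZR a1) - IZR al1) / IZR c)%R, (- IZR al2 / IZR c)%R, (- IZR al3 / IZR c)%R.
  unfold gR; cbn [qa1 qa2 qa3 qc qal1 qal2 qal3].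
  replace (IZR c * ((sqrt (IZR N / IZR a1) - IZR al1) / IZR c) + IZR al1)%R with (sqrt (IZR N / IZR a1)) by (field; lra).
  replace (IZR c * (- IZR al2 / IZR c) + IZR al2)%R with 0%R by (field; lra).
  replace (IZR c * (- IZR al3 / IZR c) + IZR al3)%R with 0%R by (field; lra).
  rewrite <- Rsqr_pow2, Rsqr_sqrt. field. lra.
  apply Rle_mult_inv_pos; lra.
Qed.

Theorem lemma3p5
  (m a1 a2 a3 al1 al2 al3 kappa nu : Z) (Tl : list Z) (s : nat) (n : Z) :
  4 <= m ->
  0 < a1 -> a1 <= a2 -> a2 <= a3 ->
  Z.gcd (Z.gcd a1 a2) a3 = 1 ->
  0 < al1 -> 2 * al1 < c_m m ->
  0 < al2 -> 2 * al2 < c_m m ->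
  0 < al3 -> 2 * al3 < c_m m ->
  Z.gcd (c_m m) (al1 * al2 * al3) = 1 ->
  tight_regular (CQP (c_m m) a1 a2 a3 al1 al2 al3) ->
  (forall p, prime p -> ~ (p | c_m m) -> pstable p a1 a2 a3) ->
  (* Tl enumerates T = { primes p >= 5 : J (x) Z_p anisotropic }, t = length Tl *)
  NoDup Tl ->
  (forall p, In p Tl <-> (prime p /\ 5 <= p /\ anisotropic p a1 a2 a3)) ->
  0 < kappa ->
  (forall p, In p Tl -> Z.gcd kappa p = 1) ->
  0 <= nu ->
  (forall u, 0 <= u ->
     rep_Zp (CQP (c_m m) a1 a2 a3 al1 al2 al3) 2
       (delta_m m * c_m m * (kappa * u + nu) + a1 * al1 ^ 2 + a2 * al2 ^ 2 + a3 * al3 ^ 2) /\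
     rep_Zp (CQP (c_m m) a1 a2 a3 al1 al2 al3) 3
       (delta_m m * c_m m * (kappa * u + nu) + a1 * al1 ^ 2 + a2 * al2 ^ 2 + a3 * al3 ^ 2)) ->
  (1 <= s)%nat -> (length Tl <= s)%nat ->
  0 < n ->
  forall e : R, is_eta n s e ->
  exists L : list Z,
    NoDup L /\
    (forall u, In u L ->
       0 <= u <= n - 1 /\
       rep_Z (CQP (c_m m) a1 a2 a3 al1 al2 al3)
         (delta_m m * c_m m * (kappa * u + nu) + a1 * al1 ^ 2 + a2 * al2 ^ 2 + a3 * al3 ^ 2)) /\
    (e <= INR (length L))%R.
Proof.
  intros Hm Ha1 Ha12 Ha23 Hga Hal1 Hal1c Hal2 Hal2c Hal3 Hal3c Hgc HTR Hst HND HT Hk Hkp Hnu H23 Hs1 Hst' Hn e Heta.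
  set (c := c_m m) in *. set (dl := delta_m m) in *.
  set (G := CQP c a1 a2 a3 al1 al2 al3) in *.
  set (A := a1 * al1 ^ 2 + a2 * al2 ^ 2 + a3 * al3 ^ 2).
  assert (Hc : 0 < c) by lia.
  assert (Hdl : dl = 1 \/ dl = 2 \/ dl = 4) by apply delta_cases.
  assert (Hbeta : forall u, dl * c * (kappa * u + nu) + a1 * al1 ^ 2 + a2 * al2 ^ 2 + a3 * al3 ^ 2
                          = a1 * al1 ^ 2 + a2 * al2 ^ 2 + a3 * al3 ^ 2 + c * (dl * (kappa * u + nu)))
    by (intro; ring).
  assert (Hal : forall p, prime p -> (p | c) -> ~ (p | al1) /\ ~ (p | al2) /\ ~ (p | al3)).
  { intros p Hp Hpc. split; [|split]; intro D; apply (nd_gcd1 p c (al1 * al2 * al3) Hp Hgc Hpc).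
    - apply Z.divide_mul_l, Z.divide_mul_l; auto.
    - apply Z.divide_mul_l, Z.divide_mul_r; auto.
    - apply Z.divide_mul_r; auto. }
  assert (Ha : forall p, prime p -> ~ (p | a1) \/ ~ (p | a2) \/ ~ (p | a3)).
  { intros p Hp. destruct (classic (p | a1)) as [D1|D1]; [|auto].
    destruct (classic (p | a2)) as [D2|D2]; [|auto]. right; right.
    apply (nd_gcd1 p (Z.gcd a1 a2) a3 Hp Hga). apply Z.gcd_greatest; auto. }
  assert (Rpc : forall p u, prime p -> 5 <= p -> (p | c) ->
     rep_Zp G p (dl * c * (kappa * u + nu) + a1 * al1 ^ 2 + a2 * al2 ^ 2 + a3 * al3 ^ 2)).
  { intros p u Hp H5 Hpc. rewrite Hbeta. destruct (Hal p Hp Hpc) as [N1 [N2 N3]].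
    apply rep_pc; auto. lia. }
  assert (StepA : forall p, In p Tl -> exists Bp : Z -> Prop,
     (forall u, 0 <= u -> ~ Bp u -> rep_Zp G p (dl * c * (kappa * u + nu) + a1 * al1 ^ 2 + a2 * al2 ^ 2 + a3 * al3 ^ 2)) /\
     (INR (length (filter (fun u => pb (Bp u)) (zr n))) <= psi p n)%R).
  { intros p Hp. assert (Hkp' := Hkp p Hp). apply HT in Hp. destruct Hp as [Pp [P5 Pan]].
    assert (Hp2 : p <> 2) by lia.
    assert (F0 : (INR (length (filter (fun u => pb False) (zr n))) <= psi p n)%R).
    { rewrite filter_false_len. simpl. apply psi_nonneg. lia. }
    destruct (classic (p | c)) as [Pc|Pc].
    - exists (fun _ => False). split; [intros u Hu _; apply Rpc; auto | exact F0].
    - assert (S := Hst p Pp Pc). unfold pstable in S. rewrite (proj2 (Z.eqb_neq p 2) Hp2) in S.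
      destruct S as [S|[D [[HD Hns] Hiso]]].
      + exists (fun _ => False). split; [intros u Hu _; apply rep_hyp; auto | exact F0].
      + destruct Hiso as [e11 [e12 [e13 [e21 [e22 [e23 [e31 [e32 [e33 [eps [P11 [P12 [P13 [P21 [P22 [P23
          [P31 [P32 [P33 [Pe [Pu [Hdet Hk']]]]]]]]]]]]]]]]]]]]]].
        exists (fun u => Bad p (eps 1%nat) true (dl * c * (kappa * u + nu) + a1 * al1 ^ 2 + a2 * al2 ^ 2 + a3 * al3 ^ 2)).
        split.
        * intros u _ HB. apply (rep_iso p c a1 a2 a3 al1 al2 al3 D _ e11 e12 e13 e21 e22 e23 e31 e32 e33 eps); auto.
        * rewrite (filter_ext _ (fun u => pb (Bad p (eps 1%nat) true ((dl * c * kappa) * u + (dl * c * nu + A))))).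
          -- apply count_zr; auto; try lia.
             assert (Nd : ~ (p | dl)).
             { intro Dd. apply Z.divide_pos_le in Dd; lia. }
             assert (Nk : ~ (p | kappa)).
             { intro Dk. apply (nd_gcd1 p kappa p Pp Hkp' Dk). apply Z.divide_refl. }
             apply prime_nd_mul; auto. apply prime_nd_mul; auto.
          -- intro u. f_equal. f_equal. unfold A. ring. }
  assert (Good : forall u, 0 <= u ->
     (forall p, In p Tl -> rep_Zp G p (dl * c * (kappa * u + nu) + a1 * al1 ^ 2 + a2 * al2 ^ 2 + a3 * al3 ^ 2)) ->
     forall q, prime q -> rep_Zp G q (dl * c * (kappa * u + nu) + a1 * al1 ^ 2 + a2 * al2 ^ 2 + a3 * al3 ^ 2)).
  { intros u Hu HTl q Hq. destruct (prime_cases q Hq) as [->|[->|H5]].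
    - apply (proj1 (H23 u Hu)).
    - apply (proj2 (H23 u Hu)).
    - destruct (classic (In q Tl)) as [I|I]; auto.
      destruct (classic (q | c)) as [Pc|Pc]; [apply Rpc; auto|].
      assert (Hq2 : q <> 2) by lia.
      assert (S := Hst q Hq Pc). unfold pstable in S. rewrite (proj2 (Z.eqb_neq q 2) Hq2) in S.
      destruct S as [S|[D [[HD Hns] Hiso]]]; [apply rep_hyp; auto|].
      exfalso. apply I. apply HT. split; auto. split; auto.
      destruct Hiso as [e11 [e12 [e13 [e21 [e22 [e23 [e31 [e32 [e33 [eps [P11 [P12 [P13 [P21 [P22 [P23
          [P31 [P32 [P33 [Pe [Pu [Hdet Hk']]]]]]]]]]]]]]]]]]]]]].
      apply (aniso_of_iso q a1 a2 a3 D e11 e12 e13 e21 e22 e23 e31 e32 e33 eps); auto. split; auto. }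
  destruct (combineB Tl (fun p u => rep_Zp G p (dl * c * (kappa * u + nu) + a1 * al1 ^ 2 + a2 * al2 ^ 2 + a3 * al3 ^ 2))
     n ltac:(lia) StepA) as [L [ND [HL Hlen]]].
  exists L. split; [exact ND|]. split.
  - intros u Hu. destruct (HL u Hu) as [Hz Hg]. apply In_zr in Hz. split; [lia|].
    assert (Hb : A <= dl * c * (kappa * u + nu) + a1 * al1 ^ 2 + a2 * al2 ^ 2 + a3 * al3 ^ 2).
    { unfold A. assert (0 <= dl * c * (kappa * u + nu)) by (apply Z.mul_nonneg_nonneg; nia). lia. }
    assert (HA : 0 <= A) by (unfold A; nia).
    destruct HTR as [gmin [_ [Hmin Htr]]]. apply Htr.
    + specialize (Hmin 0 0 0). unfold gZ in Hmin; cbn [qa1 qa2 qa3 qc qal1 qal2 qal3] in Hmin.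
      unfold G in Hmin; cbn [qa1 qa2 qa3 qc qal1 qal2 qal3] in Hmin.
      rewrite !Z.mul_0_r, !Z.add_0_l in Hmin. fold A in Hmin. lia.
    + intros q Hq. apply Good; auto. lia.
    + apply repR; lia.
  - destruct Heta as [_ Hmin]. destruct (extend (s - length Tl) Tl HND) as [ex [E1 [E2 E3]]].
    assert (Adm : admissible s (Tl ++ ex)).
    { split; auto. split. rewrite length_app; lia.
      intros p Hp. apply in_app_or in Hp. destruct Hp as [Hp|Hp]; [apply HT in Hp; tauto| apply E3; auto]. }
    specialize (Hmin _ Adm). unfold eta_value in Hmin. rewrite map_app, fold_Rplus_app in Hmin.
    assert (Nex := fold_psi_nonneg n ex (fun p Hp => proj2 (E3 p Hp))).
    lra.
Qed.
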